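(* Let $\Gamma\subset SU(2)$ be finite and $\mathbb{V}=(\mathbb{C}^2\setminus\{0\})/\Gamma$ with its standard complex structure, flat metric $g_0$ and Levi-Civita connection $\nabla_0$, and let $S^1=\{\lambda\in\mathbb{C}:|\lambda|=1\}$ act on $\mathbb{V}$ by scalar multiplication. Let $\gamma\in\Omega^1(\mathbb{V})$ be $S^1$-invariant, with $d\gamma$ of type $(1,1)$ and $|\nabla_0^k\gamma|_{g_0}=O(r^{-3-k})$ as $r\to\infty$ for all $k\ge0$, where $r=\|\cdot\|$. Then there is an $S^1$-invariant $\psi\in C^\infty(\mathbb{V})$ such that $d\gamma=\sqrt{-1}\partial\bar\partial\psi$ and $|\nabla_0^k\psi|_{g_0}=O(r^{-2-k})$ as $r\to\infty$ for all $k\ge0$. *)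

(* Defs.v *)
From Stdlib Require Import Reals List.
From Coquelicot Require Import Coquelicot.
Open Scope R_scope.

(* A point of C^2, written (z1, z2) with z_a = x_a + i y_a.
   Real coordinates: 0 -> x1, 1 -> y1, 2 -> x2, 3 -> y2. *)
Definition pt := (C * C)%type.

Definition pt0 : pt := (RtoC 0, RtoC 0).

Definition coord (p : pt) (i : nat) : R :=
  match i with
  | 0%nat => fst (fst p) | 1%nat => snd (fst p)
  | 2%nat => fst (snd p) | 3%nat => snd (snd p)
  | _ => 0 end.

Definition zc (p : pt) (a : nat) : C :=
  match a with 0%nat => fst p | _ => snd p end.

Definition shift (p : pt) (i : nat) (t : R) : pt :=
  match i with
  | 0%nat => ((fst (fst p) + t, snd (fst p)), snd p)
  | 1%nat => ((fst (fst p), snd (fst p) + t), snd p)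
  | 2%nat => (fst p, (fst (snd p) + t, snd (snd p)))
  | 3%nat => (fst p, (fst (snd p), snd (snd p) + t))
  | _ => p end.

Definition sum4 (f : nat -> R) : R := f 0%nat + f 1%nat + f 2%nat + f 3%nat.
Definition sum2C (f : nat -> C) : C := (f 0%nat + f 1%nat)%C.

Definition normpt (p : pt) : R := sqrt (sum4 (fun i => coord p i ^ 2)).
Definition ptminus (p q : pt) : pt :=
  ((fst p - fst q)%C, (snd p - snd q)%C).

Definition partial (i : nat) (f : pt -> R) (p : pt) : R :=
  Derive (fun t => f (shift p i t)) 0.
Fixpoint Dl (l : list nat) (f : pt -> R) : pt -> R :=
  match l with nil => f | i :: l' => partial i (Dl l' f) end.

Definition cont_at (f : pt -> R) (p : pt) : Prop :=
  forall eps, 0 < eps -> exists delta, 0 < delta /\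
    forall q, normpt (ptminus q p) < delta -> Rabs (f q - f p) < eps.

Definition smooth_away (f : pt -> R) : Prop :=
  forall (l : list nat) (p : pt), p <> pt0 ->
    cont_at (Dl l f) p /\
    forall i, (i < 4)%nat -> ex_derive (fun t => Dl l f (shift p i t)) 0.

(* |nabla_0^k f| = O(r^(-m-k)) as r -> oo, for all k (flat metric: nabla_0^k
   has components the k-th partial derivatives in Euclidean coordinates). *)
Definition decays (f : pt -> R) (m : nat) : Prop :=
  forall k : nat, exists Cst R0 : R, forall (l : list nat) (p : pt),
    length l = k -> p <> pt0 -> R0 <= normpt p ->
    Rabs (Dl l f p) <= Cst / (normpt p ^ (m + k)).

(* real 1-forms: gamma = sum_j a j dx_j *)
Definition oneform := nat -> pt -> R.
Definition eval1 (a : oneform) (p v : pt) : R := sum4 (fun j => a j p * coord v j).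

Definition dform1 (a : oneform) (p u v : pt) : R :=
  sum4 (fun i => sum4 (fun j =>
    partial i (a j) p * (coord u i * coord v j - coord u j * coord v i))).

Definition dzdzb (a b : nat) (u v : pt) : C :=
  (zc u a * Cconj (zc v b) - zc v a * Cconj (zc u b))%C.

Definition type11 (beta : pt -> pt -> pt -> R) : Prop :=
  forall p, p <> pt0 -> exists h : nat -> nat -> C, forall u v,
    RtoC (beta p u v) = sum2C (fun a => sum2C (fun b => (h a b * dzdzb a b u v)%C)).

(* Wirtinger second derivative d^2 psi / dz_a dzbar_b
   = 1/4 (d_{x_a} - i d_{y_a})(d_{x_b} + i d_{y_b}) psi, for real psi *)
Definition d_z_zb (psi : pt -> R) (a b : nat) (p : pt) : C :=
  Cmult (RtoC (/4))
   ((Dl (2*a :: 2*b :: nil)%nat psi p + Dl (2*a+1 :: 2*b+1 :: nil)%nat psi p)%R,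
    (Dl (2*a :: 2*b+1 :: nil)%nat psi p - Dl (2*a+1 :: 2*b :: nil)%nat psi p)%R).

Definition i_ddbar (psi : pt -> R) (p u v : pt) : C :=
  (Ci * sum2C (fun a => sum2C (fun b => d_z_zb psi a b p * dzdzb a b u v)))%C.

Definition mat2 := ((C * C) * (C * C))%type.
Definition mat_act (M : mat2) (p : pt) : pt :=
  let '((a, b), (c, d)) := M in
  ((a * fst p + b * snd p)%C, (c * fst p + d * snd p)%C).
Definition mat_mul (M N : mat2) : mat2 :=
  let '((a, b), (c, d)) := M in let '((a', b'), (c', d')) := N in
  (((a*a' + b*c')%C, (a*b' + b*d')%C), ((c*a' + d*c')%C, (c*b' + d*d')%C)).
Definition mat_adj (M : mat2) : mat2 :=
  let '((a, b), (c, d)) := M in ((Cconj a, Cconj c), (Cconj b, Cconj d)).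
Definition mat_id : mat2 := ((RtoC 1, RtoC 0), (RtoC 0, RtoC 1)).
Definition in_SU2 (M : mat2) : Prop :=
  let '((a, b), (c, d)) := M in
  mat_mul (mat_adj M) M = mat_id /\ (a * d - b * c)%C = RtoC 1.
(* Gamma, given by the list of its elements, is a finite subgroup of SU(2) *)
Definition finite_subgroup_SU2 (G : list mat2) : Prop :=
  (forall M, In M G -> in_SU2 M) /\ In mat_id G /\
  (forall M N, In M G -> In N G -> In (mat_mul M N) G) /\
  (forall M, In M G -> In (mat_adj M) G).

Definition s1act (l : C) (p : pt) : pt := ((l * fst p)%C, (l * snd p)%C).

Definition fun_inv (g : pt -> pt) (f : pt -> R) : Prop :=
  forall p, p <> pt0 -> f (g p) = f p.
Definition form1_inv (g : pt -> pt) (a : oneform) : Prop :=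
  forall p v, p <> pt0 -> eval1 a (g p) (g v) = eval1 a p v.

(* Main.v *)
Require Import Defs.
From Stdlib Require Import Reals List Lia Lra Classical ClassicalEpsilon FunctionalExtensionality.
From Coquelicot Require Import Coquelicot.
Open Scope R_scope.

Definition sc (s : R) (p : pt) : pt :=
  ((s * fst (fst p), s * snd (fst p)), (s * fst (snd p), s * snd (snd p))).

Lemma coord_shift p i t j : (i < 4)%nat ->
  coord (shift p i t) j = coord p j + (if Nat.eqb i j then t else 0).
Proof.
  intros Hi. destruct p as [[a b] [c d]].
  destruct i as [|[|[|[|i]]]]; try lia;
  destruct j as [|[|[|[|j]]]]; simpl; ring.
Qed.

Lemma coord_ge4 p j : (4 <= j)%nat -> coord p j = 0.
Proof. intros H. destruct j as [|[|[|[|j]]]]; try lia; reflexivity. Qed.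

Lemma shift_ge4 p i t : (4 <= i)%nat -> shift p i t = p.
Proof. intros H. destruct i as [|[|[|[|i]]]]; try lia; reflexivity. Qed.

Lemma pt_ext p q : (forall j, (j < 4)%nat -> coord p j = coord q j) -> p = q.
Proof.
  destruct p as [[a b] [c d]], q as [[a' b'] [c' d']]. intros H.
  pose proof (H 0%nat ltac:(lia)); pose proof (H 1%nat ltac:(lia));
  pose proof (H 2%nat ltac:(lia)); pose proof (H 3%nat ltac:(lia)).
  simpl in *; subst; reflexivity.
Qed.

Lemma shift_shift p i a b : shift (shift p i a) i b = shift p i (a + b).
Proof.
  destruct p as [[x y] [z w]]. destruct i as [|[|[|[|i]]]]; simpl; f_equal; try f_equal; ring.
Qed.

Lemma shift_comm p i j a b : shift (shift p i a) j b = shift (shift p j b) i a \/ i = j.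
Proof.
  destruct (Nat.eq_dec i j) as [->|Hn]; [now right|left].
  destruct p as [[x y] [z w]].
  destruct i as [|[|[|[|i]]]]; destruct j as [|[|[|[|j]]]]; simpl; try lia; reflexivity.
Qed.

Lemma coord_ptminus q p j : coord (ptminus q p) j = coord q j - coord p j.
Proof.
  destruct q as [[a b] [c d]], p as [[a' b'] [c' d']].
  destruct j as [|[|[|[|j]]]]; simpl; ring.
Qed.

Lemma coord_sc s p j : coord (sc s p) j = s * coord p j.
Proof.
  destruct p as [[a b] [c d]]. destruct j as [|[|[|[|j]]]]; simpl; ring.
Qed.

Lemma sum4_ge0 f : (forall j, 0 <= f j) -> 0 <= sum4 f.
Proof. intros H. unfold sum4. pose proof (H 0%nat); pose proof (H 1%nat); pose proof (H 2%nat); pose proof (H 3%nat). lra. Qed.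

Lemma normpt_ge0 p : 0 <= normpt p.
Proof. apply sqrt_pos. Qed.

Lemma normpt_coord p j : Rabs (coord p j) <= normpt p.
Proof.
  unfold normpt. rewrite <- sqrt_Rsqr_abs. apply sqrt_le_1_alt.
  unfold Rsqr, sum4.
  pose proof (pow2_ge_0 (fst (fst p))); pose proof (pow2_ge_0 (snd (fst p)));
  pose proof (pow2_ge_0 (fst (snd p))); pose proof (pow2_ge_0 (snd (snd p))).
  destruct j as [|[|[|[|j]]]]; simpl in *; nra.
Qed.

Lemma normpt_le_sum p : normpt p <= sum4 (fun j => Rabs (coord p j)).
Proof.
  unfold normpt, sum4.
  set (a := Rabs (coord p 0)); set (b := Rabs (coord p 1));
  set (c := Rabs (coord p 2)); set (d := Rabs (coord p 3)).
  assert (Ha : coord p 0 ^ 2 = a ^ 2) by (unfold a; rewrite <- pow2_abs; auto).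
  assert (Hb : coord p 1 ^ 2 = b ^ 2) by (unfold b; rewrite <- pow2_abs; auto).
  assert (Hc : coord p 2 ^ 2 = c ^ 2) by (unfold c; rewrite <- pow2_abs; auto).
  assert (Hd : coord p 3 ^ 2 = d ^ 2) by (unfold d; rewrite <- pow2_abs; auto).
  rewrite Ha, Hb, Hc, Hd.
  assert (0 <= a) by apply Rabs_pos. assert (0 <= b) by apply Rabs_pos.
  assert (0 <= c) by apply Rabs_pos. assert (0 <= d) by apply Rabs_pos.
  rewrite <- (sqrt_pow2 (a + b + c + d)) by lra.
  apply sqrt_le_1_alt. nra.
Qed.

Lemma normpt_zero_iff p : normpt p = 0 -> p = pt0.
Proof.
  intros H. apply pt_ext. intros j Hj.
  pose proof (normpt_coord p j). rewrite H in H0.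
  assert (coord p j = 0) by (apply Rabs_eq_0; pose proof (Rabs_pos (coord p j)); lra).
  rewrite H1. destruct j as [|[|[|[|j]]]]; reflexivity.
Qed.

Lemma normpt_pos p : p <> pt0 -> 0 < normpt p.
Proof.
  intros H. destruct (normpt_ge0 p) as [H'|H']; auto. exfalso; apply H, normpt_zero_iff; auto.
Qed.

Lemma normpt_sc s p : normpt (sc s p) = Rabs s * normpt p.
Proof.
  unfold normpt. rewrite <- (sqrt_pow2 (Rabs s)) by apply Rabs_pos.
  rewrite <- sqrt_mult by (try apply pow2_ge_0; apply sum4_ge0; intros; apply pow2_ge_0).
  f_equal. unfold sum4. rewrite !coord_sc. rewrite pow2_abs. ring.
Qed.

Lemma normpt_ptminus_self p : normpt (ptminus pt0 p) = normpt p.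
Proof.
  unfold normpt. f_equal. unfold sum4. rewrite !coord_ptminus.
  destruct p as [[a b] [c d]]; simpl; ring.
Qed.

Lemma near_nonzero p q : normpt (ptminus q p) < normpt p -> q <> pt0.
Proof. intros H E; subst. rewrite normpt_ptminus_self in H; lra. Qed.

Lemma ball_pt (p q : pt) (e : R) :
  ball p e q <-> forall j, (j < 4)%nat -> Rabs (coord q j - coord p j) < e.
Proof.
  destruct p as [[a b] [c d]], q as [[a' b'] [c' d']].
  split.
  - intros [[H0 H1] [H2 H3]] j Hj.
    destruct j as [|[|[|[|j]]]]; try lia; simpl; assumption.
  - intros H. 
    pose proof (H 0%nat ltac:(lia)); pose proof (H 1%nat ltac:(lia));
    pose proof (H 2%nat ltac:(lia)); pose proof (H 3%nat ltac:(lia)).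
    split; split; assumption.
Qed.

Lemma ball_R (x y e : R) : ball x e y <-> Rabs (y - x) < e.
Proof. reflexivity. Qed.

Lemma cont_at_iff (f : pt -> R) p : cont_at f p <-> continuous f p.
Proof.
  split.
  - intros H. apply filterlim_locally. intros eps.
    destruct (H eps (cond_pos eps)) as [d [Hd Hq]].
    assert (Hd4 : 0 < d / 4) by lra.
    exists (mkposreal _ Hd4). intros q Hb. apply ball_R. apply Hq.
    pose proof (proj1 (ball_pt p q _) Hb) as Hb'. clear Hb. rename Hb' into Hb. simpl in Hb.
    eapply Rle_lt_trans; [apply normpt_le_sum|]. unfold sum4. rewrite !coord_ptminus.
    pose proof (Hb 0%nat ltac:(lia)); pose proof (Hb 1%nat ltac:(lia));
    pose proof (Hb 2%nat ltac:(lia)); pose proof (Hb 3%nat ltac:(lia)). lra.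
  - intros H eps Heps. pose proof (proj1 (filterlim_locally (F := locally p) f (f p)) H (mkposreal eps Heps)) as H'. clear H; rename H' into H.
    destruct H as [d Hd]. exists d. split; [apply cond_pos|].
    intros q Hq. apply (Hd q). apply (proj2 (ball_pt p q _)). intros j _. rewrite <- coord_ptminus.
    eapply Rle_lt_trans; [apply normpt_coord|]; auto.
Qed.

Lemma cont_coord p j : continuous (fun q : pt => coord q j) p.
Proof.
  apply cont_at_iff. intros eps He. exists eps. split; auto.
  intros q Hq. rewrite <- coord_ptminus. eapply Rle_lt_trans; [apply normpt_coord|]; auto.
Qed.

Lemma cont_pt {U : UniformSpace} (g : U -> pt) x :
  (forall j, (j < 4)%nat -> continuous (fun y => coord (g y) j) x) -> continuous g x.
Proof.
  intros H. apply filterlim_locally. intros eps.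
  pose proof (proj1 (filterlim_locally (F := locally x) _ _) (H 0%nat ltac:(lia)) eps) as H0.
  pose proof (proj1 (filterlim_locally (F := locally x) _ _) (H 1%nat ltac:(lia)) eps) as H1.
  pose proof (proj1 (filterlim_locally (F := locally x) _ _) (H 2%nat ltac:(lia)) eps) as H2.
  pose proof (proj1 (filterlim_locally (F := locally x) _ _) (H 3%nat ltac:(lia)) eps) as H3.
  generalize (filter_and _ _ H0 (filter_and _ _ H1 (filter_and _ _ H2 H3))).
  apply filter_imp. intros y [A [B [C D]]]. apply (proj2 (ball_pt _ _ _)). intros j Hj.
  destruct j as [|[|[|[|j]]]]; try lia; assumption.
Qed.

Lemma normpt_mono a b : (forall j, (j < 4)%nat -> Rabs (coord a j) <= Rabs (coord b j)) ->
  normpt a <= normpt b.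
Proof.
  intros H. unfold normpt. apply sqrt_le_1_alt. unfold sum4.
  assert (forall j, (j<4)%nat -> coord a j ^ 2 <= coord b j ^ 2).
  { intros j Hj. rewrite <- (pow2_abs (coord a j)), <- (pow2_abs (coord b j)).
    pose proof (H j Hj). pose proof (Rabs_pos (coord a j)). nra. }
  pose proof (H0 0%nat ltac:(lia)); pose proof (H0 1%nat ltac:(lia));
  pose proof (H0 2%nat ltac:(lia)); pose proof (H0 3%nat ltac:(lia)). lra.
Qed.

Lemma is_derive_trans (F : R -> R) v l : is_derive (fun t => F (v + t)) 0 l -> is_derive F v l.
Proof.
  intros H.
  assert (H2 : is_derive (fun t => (fun s => F (v + s)) (t - v)) v (scal 1 l)).
  { apply (is_derive_comp (fun s => F (v + s)) (fun t => t - v)).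
    - replace (v - v) with 0 by ring. exact H.
    - auto_derive; auto; ring. }
  replace (scal 1 l) with l in H2 by (symmetry; exact (scal_one l)).
  eapply is_derive_ext; [|exact H2].
  intros t. simpl. f_equal. ring.
Qed.

Lemma shift_0 p i : shift p i 0 = p.
Proof. destruct p as [[a b] [c d]]; destruct i as [|[|[|[|i]]]]; simpl; try rewrite Rplus_0_r; reflexivity. Qed.

Lemma Dl_app l m g : Dl l (Dl m g) = Dl (l ++ m) g.
Proof. induction l; simpl; auto. rewrite IHl. reflexivity. Qed.

Lemma smooth_Dl g m : smooth_away g -> smooth_away (Dl m g).
Proof. intros H l p Hp. rewrite Dl_app. apply H; auto. Qed.

Lemma is_derive_Dl_shift g l q j v : smooth_away g -> (j < 4)%nat -> shift q j v <> pt0 ->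
  is_derive (fun t => Dl l g (shift q j t)) v (Dl (j :: l) g (shift q j v)).
Proof.
  intros Hs Hj Hn. apply is_derive_trans.
  destruct (Hs l (shift q j v) Hn) as [_ Hd]. specialize (Hd j Hj).
  apply Derive_correct in Hd.
  eapply is_derive_ext; [|exact Hd]. intros t. simpl. rewrite shift_shift. reflexivity.
Qed.

Lemma partial_at g q j v : smooth_away g -> (j < 4)%nat -> shift q j v <> pt0 ->
  Derive (fun t => g (shift q j t)) v = partial j g (shift q j v).
Proof. intros. apply is_derive_unique. apply (is_derive_Dl_shift g nil); auto. Qed.

Lemma smooth_cont g l p : smooth_away g -> p <> pt0 -> continuous (Dl l g) p.
Proof. intros H Hp. apply cont_at_iff. apply H; auto. Qed.

Section ContR.
Context {U : UniformSpace}.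
Lemma cplus (f g : U -> R) x : continuous f x -> continuous g x -> continuous (fun t => f t + g t) x.
Proof. intros; exact (continuous_plus f g x H H0). Qed.
Lemma cmult (f g : U -> R) x : continuous f x -> continuous g x -> continuous (fun t => f t * g t) x.
Proof. intros; exact (continuous_mult f g x H H0). Qed.
Lemma cconst (c : R) x : continuous (fun _ : U => c) x.
Proof. apply continuous_const. Qed.
Lemma copp (f : U -> R) x : continuous f x -> continuous (fun t => - f t) x.
Proof. intros; exact (continuous_opp f x H). Qed.
Lemma cminus (f g : U -> R) x : continuous f x -> continuous g x -> continuous (fun t => f t - g t) x.
Proof. intros; exact (continuous_minus f g x H H0). Qed.
Lemma csum4 (f : nat -> U -> R) x : (forall k, (k < 4)%nat -> continuous (f k) x) -> continuous (fun t => sum4 (fun k => f k t)) x.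
Proof. intros H. unfold sum4. repeat apply cplus; apply H; lia. Qed.
End ContR.

Definition mkpt (f : nat -> R) : pt := ((f 0%nat, f 1%nat), (f 2%nat, f 3%nat)).
Lemma coord_mkpt f j : (j < 4)%nat -> coord (mkpt f) j = f j.
Proof. intros H; destruct j as [|[|[|[|j]]]]; try lia; reflexivity. Qed.

Definition mix (x y : pt) (k : nat) : pt :=
  mkpt (fun j => if Nat.ltb j k then coord y j else coord x j).

Lemma mix0 x y : mix x y 0 = x.
Proof. apply pt_ext; intros j Hj; unfold mix; rewrite coord_mkpt; auto. Qed.
Lemma mix4 x y : mix x y 4 = y.
Proof. apply pt_ext; intros j Hj; unfold mix; rewrite coord_mkpt; auto.
  destruct (Nat.ltb_spec j 4); auto; lia. Qed.
Lemma mix_step x y k : (k < 4)%nat -> shift (mix x y k) k (coord y k - coord x k) = mix x y (S k).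
Proof.
  intros Hk. apply pt_ext; intros j Hj. rewrite coord_shift by auto. unfold mix. rewrite !coord_mkpt by auto.
  destruct (Nat.eqb_spec k j); destruct (Nat.ltb_spec j k); destruct (Nat.ltb_spec j (S k)); subst; try lia; ring.
Qed.

Lemma minmax_abs s d : Rmin 0 d <= s <= Rmax 0 d -> Rabs s <= Rabs d.
Proof.
  unfold Rmin, Rmax. destruct (Rle_dec 0 d); intros [H1 H2].
  - rewrite !Rabs_right by lra; lra.
  - rewrite !Rabs_left1 by lra; lra.
Qed.

Lemma mix_shift_bound x y k s : (k < 4)%nat -> Rabs s <= Rabs (coord y k - coord x k) ->
  normpt (ptminus (shift (mix x y k) k s) x) <= normpt (ptminus y x).
Proof.
  intros Hk Hs. apply normpt_mono. intros j Hj. rewrite !coord_ptminus, coord_shift by auto.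
  unfold mix. rewrite coord_mkpt by auto.
  destruct (Nat.eqb_spec k j); destruct (Nat.ltb_spec j k); subst; try lia.
  - replace (coord x j + s - coord x j) with s by ring. auto.
  - replace (coord y j + 0 - coord x j) with (coord y j - coord x j) by ring. lra.
  - replace (coord x j + 0 - coord x j) with 0 by ring. rewrite Rabs_R0. apply Rabs_pos.
Qed.

Lemma mvt_step g w k d : smooth_away g -> (k < 4)%nat ->
  (forall s, Rmin 0 d <= s <= Rmax 0 d -> shift w k s <> pt0) ->
  exists s, Rmin 0 d <= s <= Rmax 0 d /\ g (shift w k d) - g w = partial k g (shift w k s) * d.
Proof.
  intros Hs Hk Hn.
  destruct (MVT_gen (fun s => g (shift w k s)) 0 d (fun s => partial k g (shift w k s))) as [c [Hc E]].
  - intros s Hs'. apply (is_derive_Dl_shift g nil w k s); auto. apply Hn; lra.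
  - intros s Hs'. apply continuity_pt_filterlim. apply (ex_derive_continuous (K := R_AbsRing) (V := R_NormedModule) (fun s => g (shift w k s))).
    eexists. apply (is_derive_Dl_shift g nil w k s); auto.
  - exists c. split; auto. rewrite shift_0 in E. rewrite E. ring.
Qed.

Lemma mvd g x y : smooth_away g -> normpt (ptminus y x) < normpt x ->
  exists z : nat -> pt, (forall k, normpt (ptminus (z k) x) <= normpt (ptminus y x)) /\
    g y - g x = sum4 (fun k => (coord y k - coord x k) * partial k g (z k)).
Proof.
  intros Hs Hb.
  assert (St : forall k, (k < 4)%nat -> exists s, Rmin 0 (coord y k - coord x k) <= s <= Rmax 0 (coord y k - coord x k) /\
     g (mix x y (S k)) - g (mix x y k) = partial k g (shift (mix x y k) k s) * (coord y k - coord x k)).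
  { intros k Hk. rewrite <- (mix_step x y k Hk). apply mvt_step; auto.
    intros s Hs'. apply (near_nonzero x). eapply Rle_lt_trans; [|exact Hb].
    apply mix_shift_bound; auto. apply minmax_abs; auto. }
  destruct (St 0%nat ltac:(lia)) as [s0 [H0 E0]].
  destruct (St 1%nat ltac:(lia)) as [s1 [H1 E1]].
  destruct (St 2%nat ltac:(lia)) as [s2 [H2 E2]].
  destruct (St 3%nat ltac:(lia)) as [s3 [H3 E3]].
  exists (fun k => match k with 0 => shift (mix x y 0) 0 s0 | 1 => shift (mix x y 1) 1 s1
     | 2 => shift (mix x y 2) 2 s2 | 3 => shift (mix x y 3) 3 s3 | _ => x end).
  split.
  - intros k. destruct k as [|[|[|[|k]]]];
    try (apply mix_shift_bound; [lia| apply minmax_abs; auto]).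
    unfold ptminus. replace ((fst x - fst x)%C, (snd x - snd x)%C) with (ptminus x x) by reflexivity.
    apply normpt_mono. intros j Hj. rewrite !coord_ptminus. replace (coord x j - coord x j) with 0 by ring.
    rewrite Rabs_R0. apply Rabs_pos.
  - rewrite <- (mix4 x y) at 1. rewrite <- (mix0 x y) at 2. unfold sum4.
    replace (g (mix x y 4) - g (mix x y 0)) with
      ((g (mix x y 1) - g (mix x y 0)) + (g (mix x y 2) - g (mix x y 1)) +
       (g (mix x y 3) - g (mix x y 2)) + (g (mix x y 4) - g (mix x y 3))) by ring.
    rewrite E0, E1, E2, E3. ring.
Qed.

Lemma caratheodory (G phi : R -> R) t0 :
  locally t0 (fun t => G t - G t0 = (t - t0) * phi t) -> continuous phi t0 ->
  is_derive G t0 (phi t0).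
Proof.
  intros [d1 Hd1] Hc. apply is_derive_Reals. intros eps Heps.
  pose proof (proj1 (filterlim_locally (F := locally t0) phi (phi t0)) Hc (mkposreal eps Heps)) as [d2 Hd2].
  assert (Hd : 0 < Rmin d1 d2) by (apply Rmin_pos; apply cond_pos).
  exists (mkposreal _ Hd). intros h Hh Hhd. simpl in Hhd.
  assert (B1 : ball t0 d1 (t0 + h)).
  { apply ball_R. replace (t0 + h - t0) with h by ring. pose proof (Rmin_l d1 d2). lra. }
  assert (B2 : ball t0 d2 (t0 + h)).
  { apply ball_R. replace (t0 + h - t0) with h by ring. pose proof (Rmin_r d1 d2). lra. }
  specialize (Hd1 _ B1). specialize (Hd2 _ B2). apply ball_R in Hd2. simpl in Hd2.
  rewrite Hd1. replace (t0 + h - t0) with h by ring.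
  replace (h * phi (t0 + h) / h) with (phi (t0 + h)) by (field; auto). exact Hd2.
Qed.

Definition quot (c : R -> R) t0 d t := if Req_EM_T t t0 then d else (c t - c t0) / (t - t0).

Lemma quot_cont c t0 d : is_derive c t0 d -> continuous (quot c t0 d) t0.
Proof.
  intros H. apply is_derive_Reals in H. apply filterlim_locally. intros eps.
  destruct (H eps (cond_pos eps)) as [dl Hdl]. exists dl. intros t Ht.
  apply ball_R. apply ball_R in Ht. unfold quot.
  destruct (Req_EM_T t0 t0); [|congruence].
  destruct (Req_EM_T t t0).
  - rewrite (Rminus_diag_eq d d eq_refl). rewrite Rabs_R0. apply cond_pos.
  - specialize (Hdl (t - t0)). rewrite Rplus_minus in Hdl.
    apply Hdl; auto. lra.
Qed.

Lemma ptminus_self_zero x z : normpt (ptminus z x) <= 0 -> z = x.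
Proof.
  intros H. assert (normpt (ptminus z x) = 0) by (pose proof (normpt_ge0 (ptminus z x)); lra).
  apply normpt_zero_iff in H0. apply pt_ext. intros j Hj.
  assert (coord (ptminus z x) j = 0) by (rewrite H0; destruct j as [|[|[|[|j]]]]; reflexivity).
  rewrite coord_ptminus in H1. lra.
Qed.

Lemma cont_curve (c : R -> pt) t0 dc :
  (forall k, (k < 4)%nat -> is_derive (fun t => coord (c t) k) t0 (dc k)) -> continuous c t0.
Proof.
  intros H. apply cont_pt. intros j Hj.
  apply (ex_derive_continuous (K := R_AbsRing) (V := R_NormedModule) (fun t => coord (c t) j)).
  eexists; apply H; auto.
Qed.

Lemma locally_near (c : R -> pt) t0 r : continuous c t0 -> 0 < r ->
  locally t0 (fun t => normpt (ptminus (c t) (c t0)) < r).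
Proof.
  intros Hc Hr.
  assert (Hr4 : 0 < r / 5) by lra.
  pose proof (proj1 (filterlim_locally (F := locally t0) c (c t0)) Hc (mkposreal _ Hr4)) as Hl.
  eapply filter_imp; [|exact Hl]. intros t Hb.
  pose proof (proj1 (ball_pt _ _ _) Hb) as Hb'. simpl in Hb'.
  eapply Rle_lt_trans; [apply normpt_le_sum|]. unfold sum4. rewrite !coord_ptminus.
  pose proof (Hb' 0%nat ltac:(lia)); pose proof (Hb' 1%nat ltac:(lia));
  pose proof (Hb' 2%nat ltac:(lia)); pose proof (Hb' 3%nat ltac:(lia)). lra.
Qed.

Lemma chain_rule g (c : R -> pt) t0 (dc : nat -> R) : smooth_away g -> c t0 <> pt0 ->
  (forall k, (k < 4)%nat -> is_derive (fun t => coord (c t) k) t0 (dc k)) ->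
  is_derive (fun t => g (c t)) t0 (sum4 (fun k => dc k * partial k g (c t0))).
Proof.
  intros Hs Hx Hd. set (x := c t0).
  assert (Hnx : 0 < normpt x) by (apply normpt_pos; auto).
  set (P := fun t (z : nat -> pt) => normpt (ptminus (c t) x) < normpt x ->
     (forall k, normpt (ptminus (z k) x) <= normpt (ptminus (c t) x)) /\
     g (c t) - g x = sum4 (fun k => (coord (c t) k - coord x k) * partial k g (z k))).
  assert (HZ : forall t, {z : nat -> pt | P t z}).
  { intros t. apply constructive_indefinite_description.
    destruct (classic (normpt (ptminus (c t) x) < normpt x)) as [Hc|Hc].
    - destruct (mvd g x (c t) Hs Hc) as [z Hz]. exists z. intros _. exact Hz.
    - exists (fun _ => x). intros H; contradiction. }
  set (Z := fun t => proj1_sig (HZ t)).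
  assert (HZP : forall t, P t (Z t)) by (intros t; unfold Z; destruct (HZ t); auto).
  set (phi := fun t => sum4 (fun k => quot (fun s => coord (c s) k) t0 (dc k) t * partial k g (Z t k))).
  assert (Hcc : continuous c t0) by (apply (cont_curve c t0 dc); auto).
  assert (Hx0 : normpt (ptminus x x) = 0).
  { replace (ptminus x x) with pt0. unfold normpt, sum4; simpl. transitivity (sqrt 0); [f_equal; ring | apply sqrt_0].
    apply pt_ext; intros j Hj; rewrite coord_ptminus. destruct j as [|[|[|[|j]]]]; simpl; ring. }
  assert (HZ0 : forall k, Z t0 k = x).
  { intros k. destruct (HZP t0) as [Hb _].
    - fold x. rewrite Hx0. exact Hnx.
    - apply ptminus_self_zero. specialize (Hb k). fold x in Hb. rewrite Hx0 in Hb. exact Hb. }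
  replace (sum4 (fun k => dc k * partial k g x)) with (phi t0).
  2:{ unfold phi, quot, sum4. destruct (Req_EM_T t0 t0); [|congruence]. rewrite !HZ0. fold x. reflexivity. }
  apply (caratheodory (fun t => g (c t)) phi t0).
  - eapply filter_imp; [|apply (locally_near c t0 _ Hcc Hnx)].
    intros t Ht. destruct (HZP t Ht) as [_ E]. fold x. rewrite E. unfold phi, sum4, quot.
    destruct (Req_EM_T t t0) as [->|Hne].
    + fold x. ring.
    + unfold x. assert (t - t0 <> 0) by lra. field. auto.
  - unfold phi. apply csum4. intros k Hk. apply cmult.
    + apply quot_cont. apply Hd; auto.
    + apply filterlim_locally. intros eps.
      assert (Hpc : cont_at (partial k g) x) by (apply (Hs (k :: nil)); auto).
      destruct (Hpc eps (cond_pos eps)) as [dd [Hdd Hq]].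
      assert (Hm : 0 < Rmin dd (normpt x)) by (apply Rmin_pos; auto).
      eapply filter_imp; [|apply (locally_near c t0 _ Hcc Hm)].
      intros t Ht. apply ball_R. rewrite HZ0. fold x in Ht.
      destruct (HZP t) as [Hb _]. { pose proof (Rmin_r dd (normpt x)); lra. }
      apply Hq. eapply Rle_lt_trans; [apply Hb|]. pose proof (Rmin_l dd (normpt x)); lra.
Qed.

Lemma sum4_le f g : (forall k, (k < 4)%nat -> f k <= g k) -> sum4 f <= sum4 g.
Proof. intros H. unfold sum4. pose proof (H 0%nat ltac:(lia)); pose proof (H 1%nat ltac:(lia));
  pose proof (H 2%nat ltac:(lia)); pose proof (H 3%nat ltac:(lia)). lra. Qed.

Lemma sum4_delta i (a : R) : (i < 4)%nat -> sum4 (fun k => if Nat.eqb i k then a else 0) = a.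
Proof. intros H. unfold sum4. destruct i as [|[|[|[|i]]]]; try lia; simpl; ring. Qed.

Lemma shift2_near p i j u v : (i < 4)%nat -> (j < 4)%nat ->
  normpt (ptminus (shift (shift p i u) j v) p) <= Rabs u + Rabs v.
Proof.
  intros Hi Hj. eapply Rle_trans; [apply normpt_le_sum|].
  rewrite <- (sum4_delta i (Rabs u)), <- (sum4_delta j (Rabs v)) by auto.
  replace (sum4 (fun k => if Nat.eqb i k then Rabs u else 0) + sum4 (fun k => if Nat.eqb j k then Rabs v else 0))
    with (sum4 (fun k => (if Nat.eqb i k then Rabs u else 0) + (if Nat.eqb j k then Rabs v else 0)))
    by (unfold sum4; ring).
  apply sum4_le. intros k Hk. rewrite coord_ptminus, !coord_shift by auto.
  destruct (Nat.eqb i k), (Nat.eqb j k).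
  - replace (coord p k + u + v - coord p k) with (u + v) by ring; apply Rabs_triang.
  - replace (coord p k + u + 0 - coord p k) with u by ring; lra.
  - replace (coord p k + 0 + v - coord p k) with v by ring; lra.
  - replace (coord p k + 0 + 0 - coord p k) with 0 by ring; rewrite Rabs_R0; lra.
Qed.

Lemma cont2d_shift (h : pt -> R) p i j : cont_at h p -> (i < 4)%nat -> (j < 4)%nat ->
  continuity_2d_pt (fun u v => h (shift (shift p i u) j v)) 0 0.
Proof.
  intros Hc Hi Hj eps. destruct (Hc eps (cond_pos eps)) as [d [Hd Hq]].
  assert (Hd2 : 0 < d / 2) by lra. exists (mkposreal _ Hd2). intros u v Hu Hv. simpl in Hu, Hv.
  rewrite !shift_0. apply Hq. eapply Rle_lt_trans; [apply shift2_near; auto|].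
  rewrite Rminus_0_r in Hu, Hv. lra.
Qed.

Lemma near_p_nonzero p i j u v : p <> pt0 -> (i < 4)%nat -> (j < 4)%nat ->
  Rabs u + Rabs v < normpt p -> shift (shift p i u) j v <> pt0.
Proof.
  intros Hp Hi Hj H. apply (near_nonzero p). eapply Rle_lt_trans; [apply shift2_near|]; auto.
Qed.

Lemma schwarz g p i j : smooth_away g -> p <> pt0 -> (i < 4)%nat -> (j < 4)%nat ->
  Dl (i :: j :: nil) g p = Dl (j :: i :: nil) g p.
Proof.
  intros Hs Hp Hi Hj.
  destruct (Nat.eq_dec i j) as [->|Hne]; [reflexivity|].
  assert (Hcm : forall u v, shift (shift p i u) j v = shift (shift p j v) i u).
  { intros u v. destruct (shift_comm p i j u v); auto; lia. }
  assert (Hnp : 0 < normpt p) by (apply normpt_pos; auto).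
  set (F := fun u v => g (shift (shift p i u) j v)).
  assert (NZ : forall u v, Rabs u + Rabs v < normpt p -> shift (shift p i u) j v <> pt0)
    by (intros; apply near_p_nonzero; auto).
  assert (NZ' : forall u v, Rabs u + Rabs v < normpt p -> shift (shift p j v) i u <> pt0)
    by (intros; rewrite <- Hcm; auto).
  assert (Hd4 : 0 < normpt p / 4) by lra.
  assert (L1 : forall u v, Rabs u + Rabs v < normpt p ->
     Derive (fun t => F u t) v = Dl (j :: nil) g (shift (shift p j v) i u)).
  { intros u v H. unfold F. rewrite partial_at by auto. simpl. rewrite Hcm. reflexivity. }
  assert (L2 : forall u v, Rabs u + Rabs v < normpt p ->
     Derive (fun t => F t v) u = Dl (i :: nil) g (shift (shift p i u) j v)).
  { intros u v H. unfold F.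
    rewrite (Derive_ext _ (fun t => g (shift (shift p j v) i t))) by (intros; rewrite Hcm; reflexivity).
    rewrite partial_at by auto. simpl. rewrite Hcm. reflexivity. }
  assert (LOC : forall u v, Rabs u < normpt p / 4 -> Rabs v < normpt p / 4 ->
     locally u (fun z => Rabs z + Rabs v < normpt p)).
  { intros u v Hu Hv. exists (mkposreal _ Hd4). intros z Hz. change (Rabs (z - u) < normpt p / 4) in Hz.
    pose proof (Rabs_triang_inv z u). lra. }
  assert (LOCv : forall u v, Rabs u < normpt p / 4 -> Rabs v < normpt p / 4 ->
     locally v (fun z => Rabs u + Rabs z < normpt p)).
  { intros u v Hu Hv. exists (mkposreal _ Hd4). intros z Hz. change (Rabs (z - v) < normpt p / 4) in Hz.
    pose proof (Rabs_triang_inv z v). lra. }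
  assert (Hgoal := Schwarz F 0 0).
  change (Dl (i :: j :: nil) g p) with (Derive (fun z => Derive (fun t => F z t) 0) 0).
  transitivity (Derive (fun z => Derive (fun t => F t z) 0) 0).
  2:{ change (Dl (j :: i :: nil) g p) with (Derive (fun z => partial i g (shift p j z)) 0).
      apply Derive_ext. intros z. unfold F, partial. apply Derive_ext. intros t. rewrite Hcm. reflexivity. }
  apply Hgoal.
  - exists (mkposreal _ Hd4). intros u v Hu Hv. simpl in Hu, Hv. rewrite Rminus_0_r in Hu, Hv.
    split; [|split; [|split]].
    + eexists. unfold F. eapply is_derive_ext; [intros t; rewrite Hcm; reflexivity|].
      apply (is_derive_Dl_shift g nil); auto. apply NZ'. lra.
    + eexists. apply (is_derive_Dl_shift g nil); auto. apply NZ. lra.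
    + eapply ex_derive_ext_loc.
      { eapply filter_imp; [|apply (LOC u v Hu Hv)]. intros z Hz. symmetry. apply L1. auto. }
      eexists. apply (is_derive_Dl_shift g (j :: nil)); auto. apply NZ'. lra.
    + eapply ex_derive_ext_loc.
      { eapply filter_imp; [|apply (LOCv u v Hu Hv)]. intros z Hz. symmetry. apply L2. auto. }
      eexists. apply (is_derive_Dl_shift g (i :: nil)); auto. apply NZ. lra.
  - apply continuity_2d_pt_ext_loc with (f := fun u v => Dl (i :: j :: nil) g (shift (shift p i u) j v)).
    + exists (mkposreal _ Hd4). intros u v Hu Hv. simpl in Hu, Hv. rewrite Rminus_0_r in Hu, Hv.
      symmetry. rewrite (Derive_ext_loc _ (fun z => Dl (j :: nil) g (shift (shift p j v) i z))).
      * rewrite Hcm. apply is_derive_unique. apply (is_derive_Dl_shift g (j :: nil)); auto.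
        apply NZ'. lra.
      * eapply filter_imp; [|apply (LOC u v Hu Hv)]. intros z Hz. apply L1. auto.
    + apply cont2d_shift; auto. apply Hs; auto.
  - apply continuity_2d_pt_ext_loc with (f := fun u v => Dl (j :: i :: nil) g (shift (shift p i u) j v)).
    + exists (mkposreal _ Hd4). intros u v Hu Hv. simpl in Hu, Hv. rewrite Rminus_0_r in Hu, Hv.
      symmetry. rewrite (Derive_ext_loc _ (fun z => Dl (i :: nil) g (shift (shift p i u) j z))).
      * apply is_derive_unique. apply (is_derive_Dl_shift g (i :: nil)); auto.
        apply NZ. lra.
      * eapply filter_imp; [|apply (LOCv u v Hu Hv)]. intros z Hz. apply L2. auto.
    + apply cont2d_shift; auto. apply Hs; auto.
Qed.

Lemma locally_nonzero p : p <> pt0 -> locally p (fun q => q <> pt0).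
Proof.
  intros Hp. assert (H : 0 < normpt p / 5) by (pose proof (normpt_pos p Hp); lra).
  exists (mkposreal _ H). intros q Hq. apply (near_nonzero p).
  pose proof (proj1 (ball_pt _ _ _) Hq) as Hb. simpl in Hb.
  eapply Rle_lt_trans; [apply normpt_le_sum|]. unfold sum4. rewrite !coord_ptminus.
  pose proof (Hb 0%nat ltac:(lia)); pose proof (Hb 1%nat ltac:(lia));
  pose proof (Hb 2%nat ltac:(lia)); pose proof (Hb 3%nat ltac:(lia)). lra.
Qed.

Lemma locally_shift_nonzero p i : p <> pt0 -> (i < 4)%nat -> locally 0 (fun t => shift p i t <> pt0).
Proof.
  intros Hp Hi. assert (H : 0 < normpt p / 2) by (pose proof (normpt_pos p Hp); lra).
  exists (mkposreal _ H). intros t Ht. change (Rabs (t - 0) < normpt p / 2) in Ht.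
  rewrite Rminus_0_r in Ht. rewrite <- (shift_0 (shift p i t) i).
  apply near_p_nonzero; auto. rewrite Rabs_R0. lra.
Qed.

Lemma partial_ge4 i h p : (4 <= i)%nat -> partial i h p = 0.
Proof.
  intros Hi. unfold partial. rewrite (Derive_ext _ (fun _ => h p)). apply Derive_const.
  intros t. rewrite shift_ge4; auto.
Qed.

Lemma Dl_ge4 i l h p : (4 <= i)%nat -> Dl (i :: l) h p = 0.
Proof. intros; simpl; apply partial_ge4; auto. Qed.

Lemma Dl_step_ext (G : pt -> R) (H : pt -> R) l (g : pt -> R) i p :
  p <> pt0 -> (i < 4)%nat ->
  (forall q, q <> pt0 -> Dl l g q = G q) ->
  is_derive (fun t => G (shift p i t)) 0 (H p) -> Dl (i :: l) g p = H p.
Proof.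
  intros Hp Hi HG Hd. simpl. unfold partial.
  rewrite (Derive_ext_loc _ (fun t => G (shift p i t))).
  - apply is_derive_unique; auto.
  - eapply filter_imp; [|apply locally_shift_nonzero; eauto]. intros t Ht. apply HG; auto.
Qed.

Lemma is_derive_Dl_0 g l p i : smooth_away g -> (i < 4)%nat -> p <> pt0 ->
  is_derive (fun t => Dl l g (shift p i t)) 0 (Dl (i :: l) g p).
Proof.
  intros. pose proof (is_derive_Dl_shift g l p i 0 H H0). rewrite shift_0 in H2. auto.
Qed.

Section Lin.
Variables (a b : R) (g h : pt -> R).
Hypotheses (Hg : smooth_away g) (Hh : smooth_away h).

Lemma Dl_lin l : forall p, p <> pt0 -> Dl l (fun q => a * g q + b * h q) p = a * Dl l g p + b * Dl l h p.
Proof.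
  induction l as [|i l IH]; intros p Hp; [reflexivity|].
  destruct (Nat.lt_ge_cases i 4) as [Hi|Hi]; [|rewrite !Dl_ge4 by auto; ring].
  apply (Dl_step_ext (fun q => a * Dl l g q + b * Dl l h q) (fun q => a * Dl (i :: l) g q + b * Dl (i :: l) h q)); auto.
  apply (is_derive_plus (fun t => a * Dl l g (shift p i t)) (fun t => b * Dl l h (shift p i t)));
  apply is_derive_scal; apply is_derive_Dl_0; auto.
Qed.

Lemma smooth_lin : smooth_away (fun q => a * g q + b * h q).
Proof.
  intros l p Hp. split.
  - apply cont_at_iff. apply (continuous_ext_loc _ (fun q => a * Dl l g q + b * Dl l h q)).
    { eapply filter_imp; [|apply locally_nonzero; eauto]. intros q Hq. symmetry. apply Dl_lin; auto. }
    apply cplus; apply cmult; try apply cconst; apply smooth_cont; auto.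
  - intros i Hi. eexists. eapply is_derive_ext_loc.
    { eapply filter_imp; [|apply locally_shift_nonzero; eauto]. intros t Ht. symmetry. apply Dl_lin; auto. }
    apply (is_derive_plus (fun t => a * Dl l g (shift p i t)) (fun t => b * Dl l h (shift p i t)));
    apply is_derive_scal; apply is_derive_Dl_0; auto.
Qed.

Lemma decays_lin m : decays g m -> decays h m -> decays (fun q => a * g q + b * h q) m.
Proof.
  intros Dg Dh k. destruct (Dg k) as [C1 [R1 H1]], (Dh k) as [C2 [R2 H2]].
  exists (Rabs a * Rabs C1 + Rabs b * Rabs C2), (Rmax R1 R2). intros l p Hl Hp HR.
  rewrite Dl_lin by auto.
  specialize (H1 l p Hl Hp (Rle_trans _ _ _ (Rmax_l R1 R2) HR)).
  specialize (H2 l p Hl Hp (Rle_trans _ _ _ (Rmax_r R1 R2) HR)).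
  assert (Hn : 0 < normpt p ^ (m + k)) by (apply pow_lt; apply normpt_pos; auto).
  unfold Rdiv in *. rewrite Rmult_plus_distr_r.
  eapply Rle_trans; [apply Rabs_triang|]. rewrite !Rabs_mult.
  apply Rplus_le_compat; rewrite Rmult_assoc; apply Rmult_le_compat_l; try apply Rabs_pos;
  (eapply Rle_trans; [eassumption|]); apply Rmult_le_compat_r;
  try (left; apply Rinv_0_lt_compat; auto); apply Rle_abs.
Qed.
End Lin.

Definition mulc (j : nat) (g : pt -> R) := fun q => coord q j * g q.
Fixpoint Lc (j : nat) (l : list nat) : list (list nat) :=
  match l with nil => nil
  | i :: l' => (if Nat.eqb i j then l' :: nil else nil) ++ map (cons i) (Lc j l') end.
Definition sumL (s : list R) := fold_right Rplus 0 s.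
Definition RHS j g l p := coord p j * Dl l g p + sumL (map (fun l' => Dl l' g p) (Lc j l)).

Lemma sumL_app s t : sumL (s ++ t) = sumL s + sumL t.
Proof. induction s; simpl; [ring|]. unfold sumL in *. simpl. rewrite IHs. ring. Qed.

Lemma is_derive_sumL g Ls p i : smooth_away g -> (i < 4)%nat -> p <> pt0 ->
  is_derive (fun t => sumL (map (fun l' => Dl l' g (shift p i t)) Ls)) 0
    (sumL (map (fun l' => Dl (i :: l') g p) Ls)).
Proof.
  intros Hs Hi Hp. induction Ls as [|l' Ls IH]; simpl.
  - apply (is_derive_const 0).
  - apply (is_derive_plus (fun t => Dl l' g (shift p i t)) (fun t => sumL (map (fun l' => Dl l' g (shift p i t)) Ls)));
    auto. apply is_derive_Dl_0; auto.
Qed.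

Lemma is_derive_coord p i j : (i < 4)%nat ->
  is_derive (fun t => coord (shift p i t) j) 0 (if Nat.eqb i j then 1 else 0).
Proof.
  intros Hi. apply (is_derive_ext (fun t => coord p j + (if Nat.eqb i j then t else 0))).
  { intros t. rewrite coord_shift by auto. reflexivity. }
  destruct (Nat.eqb i j); auto_derive; auto; ring.
Qed.

Lemma cont_sumL (Ls : list (list nat)) (F : list nat -> pt -> R) p :
  (forall l', continuous (F l') p) -> continuous (fun q => sumL (map (fun l' => F l' q) Ls)) p.
Proof.
  intros H. induction Ls; simpl.
  - apply cconst.
  - apply cplus; auto.
Qed.

Section Mulc.
Variables (j : nat) (g : pt -> R).
Hypotheses (Hg : smooth_away g) (Hj : (j < 4)%nat).

Lemma RHS_deriv l p i : (i < 4)%nat -> p <> pt0 ->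
  is_derive (fun t => RHS j g l (shift p i t)) 0 (RHS j g (i :: l) p).
Proof.
  intros Hi Hp.
  pose proof (is_derive_mult (fun t => coord (shift p i t) j) (fun t => Dl l g (shift p i t)) 0 _ _
     (is_derive_coord p i j Hi) (is_derive_Dl_0 g l p i Hg Hi Hp) Rmult_comm) as H1.
  pose proof (is_derive_sumL g (Lc j l) p i Hg Hi Hp) as H2.
  pose proof (is_derive_plus _ _ _ _ _ H1 H2) as H3.
  unfold RHS. eapply is_derive_ext; [intros t; reflexivity|].
  replace (coord p j * Dl (i :: l) g p + sumL (map (fun l' => Dl l' g p) (Lc j (i :: l))))
    with (plus (plus (mult (if Nat.eqb i j then 1 else 0) (Dl l g (shift p i 0)))
       (mult (coord (shift p i 0) j) (Dl (i :: l) g p))) (sumL (map (fun l' => Dl (i :: l') g p) (Lc j l)))).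
  { exact H3. }
  rewrite shift_0. simpl Lc. rewrite map_app, sumL_app, map_map.
  change (plus (plus (mult ?a ?b) (mult ?c ?d)) ?e) with (a * b + c * d + e).
  destruct (Nat.eqb i j); simpl; unfold sumL; simpl; ring.
Qed.

Lemma sumL_zero (Ls : list (list nat)) (F : list nat -> R) : (forall l', F l' = 0) -> sumL (map F Ls) = 0.
Proof. intros H. induction Ls; simpl; auto. unfold sumL in *; simpl. rewrite H, IHLs. ring. Qed.

Lemma mulc_formula l : forall p, p <> pt0 -> Dl l (mulc j g) p = RHS j g l p.
Proof.
  induction l as [|i l IH]; intros p Hp.
  - unfold RHS; simpl. unfold mulc, sumL; simpl. ring.
  - destruct (Nat.lt_ge_cases i 4) as [Hi|Hi].
    + apply (Dl_step_ext (RHS j g l) (RHS j g (i :: l))); auto. apply RHS_deriv; auto.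
    + rewrite Dl_ge4 by auto. unfold RHS. rewrite Dl_ge4 by auto. simpl Lc.
      destruct (Nat.eqb_spec i j); [lia|]. simpl. rewrite map_map.
      rewrite sumL_zero; [ring|]. intros l'. apply Dl_ge4; auto.
Qed.

Lemma smooth_mulc : smooth_away (mulc j g).
Proof.
  intros l p Hp. split.
  - apply cont_at_iff. apply (continuous_ext_loc _ (RHS j g l)).
    { eapply filter_imp; [|apply locally_nonzero; eauto]. intros q Hq. symmetry. apply mulc_formula; auto. }
    unfold RHS. apply cplus.
    + apply cmult; [apply cont_coord|apply smooth_cont; auto].
    + apply cont_sumL. intros l'. apply smooth_cont; auto.
  - intros i Hi. eexists. eapply is_derive_ext_loc.
    { eapply filter_imp; [|apply locally_shift_nonzero; eauto]. intros t Ht. symmetry. apply mulc_formula; auto. }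
    apply RHS_deriv; auto.
Qed.

Lemma Lc_len l : forall l', In l' (Lc j l) -> S (length l') = length l.
Proof.
  induction l as [|i l IH]; simpl; [tauto|]. intros l' Hin. apply in_app_or in Hin. destruct Hin as [Hin|Hin].
  - destruct (Nat.eqb i j); simpl in Hin; [destruct Hin as [<-|[]]; auto | contradiction].
  - apply in_map_iff in Hin. destruct Hin as [x [<- Hx]]. simpl. rewrite (IH x Hx). reflexivity.
Qed.

Lemma Lc_length l : (length (Lc j l) <= length l)%nat.
Proof.
  induction l as [|i l IH]; simpl; auto. rewrite length_app, length_map.
  destruct (Nat.eqb i j); simpl; lia.
Qed.

Lemma sumL_bound (Ls : list (list nat)) (F : list nat -> R) B : 0 <= B ->
  (forall l', In l' Ls -> Rabs (F l') <= B) -> Rabs (sumL (map F Ls)) <= INR (length Ls) * B.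
Proof.
  intros HB H. induction Ls as [|a Ls IH].
  - simpl. unfold sumL; simpl. rewrite Rabs_R0. lra.
  - change (length (a :: Ls)) with (S (length Ls)). rewrite S_INR. unfold sumL in *.
    simpl map. simpl fold_right. eapply Rle_trans; [apply Rabs_triang|].
    assert (H1 := H a (or_introl eq_refl)).
    assert (H2 : Rabs (fold_right Rplus 0 (map F Ls)) <= INR (length Ls) * B)
      by (apply IH; intros l' Hl'; apply H; right; auto).
    lra.
Qed.

Lemma decays_mulc m : decays g (S m) -> decays (mulc j g) m.
Proof.
  intros Dg k. destruct (Dg k) as [C1 [R1 H1]], (Dg (pred k)) as [C2 [R2 H2]].
  exists (Rabs C1 + INR k * Rabs C2), (Rmax R1 R2). intros l p Hl Hp HR.
  rewrite mulc_formula by auto. unfold RHS.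
  assert (Hn : 0 < normpt p) by (apply normpt_pos; auto).
  assert (Hnk : 0 < normpt p ^ (m + k)) by (apply pow_lt; auto).
  specialize (H1 l p Hl Hp (Rle_trans _ _ _ (Rmax_l R1 R2) HR)).
  eapply Rle_trans; [apply Rabs_triang|]. rewrite Rabs_mult.
  unfold Rdiv. rewrite Rmult_plus_distr_r.
  apply Rplus_le_compat.
  - eapply Rle_trans. { apply Rmult_le_compat; try apply Rabs_pos. apply normpt_coord. exact H1. }
    replace (S m + k)%nat with (S (m + k)) by lia. simpl pow. unfold Rdiv.
    rewrite Rinv_mult. replace (normpt p * (C1 * (/ normpt p * / normpt p ^ (m + k))))
      with (C1 * / normpt p ^ (m + k)) by (field; lra).
    apply Rmult_le_compat_r; [left; apply Rinv_0_lt_compat; auto| apply Rle_abs].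
  - destruct k as [|k].
    + destruct l; simpl in Hl; try lia. simpl. unfold sumL; simpl. rewrite Rabs_R0.
      replace (0 * Rabs C2 * / normpt p ^ (m + 0)) with 0 by ring. lra.
    + eapply Rle_trans.
      { apply (sumL_bound _ _ (Rabs C2 * / normpt p ^ (m + S k))).
        - apply Rmult_le_pos; [apply Rabs_pos| left; apply Rinv_0_lt_compat; auto].
        - intros l' Hin. pose proof (Lc_len l l' Hin) as E. rewrite Hl in E. injection E as E.
          eapply Rle_trans; [apply (H2 l' p); auto; eapply Rle_trans; [apply Rmax_r|exact HR]|].
          replace (S m + pred (S k))%nat with (m + S k)%nat by (simpl; lia).
          unfold Rdiv. apply Rmult_le_compat_r; [left; apply Rinv_0_lt_compat; auto| apply Rle_abs]. }
      rewrite Rmult_assoc. apply Rmult_le_compat_r.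
      * apply Rmult_le_pos; [apply Rabs_pos| left; apply Rinv_0_lt_compat; auto].
      * apply le_INR. rewrite <- Hl. apply Lc_length.
Qed.
End Mulc.

Definition Jidx (k : nat) : nat := match k with 0 => 1 | 1 => 0 | 2 => 3 | 3 => 2 | _ => k end%nat.
Definition Jsgn (k : nat) : R := match k with 0%nat => -1 | 1%nat => 1 | 2%nat => -1 | 3%nat => 1 | _ => 0 end.
Definition Jc (v : pt) (j : nat) : R := Jsgn j * coord v (Jidx j).

Lemma coord_s1act_Ci v j : coord (s1act Ci v) j = Jc v j.
Proof. destruct v as [[a b] [c d]]. unfold Jc; destruct j as [|[|[|[|j]]]]; simpl; ring. Qed.

Definition fpot (gamma : oneform) (q : pt) : R := eval1 gamma q (s1act Ci q).

Definition lin (a b : R) (g h : pt -> R) := fun q => a * g q + b * h q.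

Lemma fpot_lin gamma : fpot gamma =
  lin (-1) 1 (mulc 1 (gamma 0%nat)) (lin 1 1 (mulc 0 (gamma 1%nat))
     (lin (-1) 1 (mulc 3 (gamma 2%nat)) (mulc 2 (gamma 3%nat)))).
Proof.
  apply functional_extensionality. intros q. unfold fpot, eval1, lin, mulc, sum4.
  rewrite !coord_s1act_Ci. unfold Jc; simpl. ring.
Qed.

Section Fpot.
Variable gamma : oneform.
Hypothesis Hsm : forall j, (j < 4)%nat -> smooth_away (gamma j).

Lemma smooth_fpot : smooth_away (fpot gamma).
Proof.
  rewrite fpot_lin. unfold lin.
  apply smooth_lin; [apply smooth_mulc; [apply Hsm|]; lia|].
  apply smooth_lin; [apply smooth_mulc; [apply Hsm|]; lia|].
  apply smooth_lin; apply smooth_mulc; try (apply Hsm); lia.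
Qed.

Lemma decays_fpot : (forall j, (j < 4)%nat -> decays (gamma j) 3) -> decays (fpot gamma) 2.
Proof.
  intros Hd. rewrite fpot_lin. unfold lin.
  assert (SM : forall j k, (j < 4)%nat -> (k < 4)%nat -> smooth_away (mulc k (gamma j)))
    by (intros; apply smooth_mulc; auto).
  assert (DM : forall j k, (j < 4)%nat -> (k < 4)%nat -> decays (mulc k (gamma j)) 2)
    by (intros; apply decays_mulc; auto).
  apply decays_lin; [apply SM; lia| |apply DM; lia|].
  { apply smooth_lin; [apply SM; lia|]. apply smooth_lin; apply SM; lia. }
  apply decays_lin; [apply SM; lia| |apply DM; lia|].
  { apply smooth_lin; apply SM; lia. }
  apply decays_lin; [apply SM; lia|apply SM; lia|apply DM; lia|apply DM; lia].
Qed.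

Definition P (i j : nat) (q : pt) : R := partial i (gamma j) q.

Lemma is_derive_Jc q m j : (m < 4)%nat -> (j < 4)%nat ->
  is_derive (fun t => Jc (shift q m t) j) 0 (Jsgn j * (if Nat.eqb m (Jidx j) then 1 else 0)).
Proof.
  intros Hm Hj. unfold Jc. apply is_derive_scal. apply is_derive_coord; auto.
Qed.

Lemma partial_fpot q m : q <> pt0 -> (m < 4)%nat ->
  partial m (fpot gamma) q =
  sum4 (fun j => P m j q * Jc q j + gamma j q * (Jsgn j * (if Nat.eqb m (Jidx j) then 1 else 0))).
Proof.
  intros Hq Hm. unfold partial. apply is_derive_unique.
  unfold fpot, eval1. apply (is_derive_ext (fun t => sum4 (fun j => gamma j (shift q m t) * Jc (shift q m t) j))).
  { intros t. unfold sum4. rewrite !coord_s1act_Ci. reflexivity. }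
  assert (Hj : forall j, (j < 4)%nat -> is_derive (fun t => gamma j (shift q m t) * Jc (shift q m t) j) 0
     (P m j q * Jc q j + gamma j q * (Jsgn j * (if Nat.eqb m (Jidx j) then 1 else 0)))).
  { intros j Hj.
    pose proof (is_derive_mult (fun t => gamma j (shift q m t)) (fun t => Jc (shift q m t) j) 0 _ _
      (is_derive_Dl_0 (gamma j) nil q m (Hsm j Hj) Hm Hq) (is_derive_Jc q m j Hm Hj) Rmult_comm) as H.
    cbv beta in H. rewrite ?shift_0 in H. exact H. }
  unfold sum4.
  exact (is_derive_plus _ _ _ _ _ (is_derive_plus _ _ _ _ _ (is_derive_plus _ _ _ _ _
     (Hj 0%nat ltac:(lia)) (Hj 1%nat ltac:(lia))) (Hj 2%nat ltac:(lia))) (Hj 3%nat ltac:(lia))).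
Qed.
End Fpot.

Lemma coord_s1act l v j : coord (s1act l v) j = fst l * coord v j + snd l * Jc v j.
Proof. destruct v as [[a b] [c d]], l as [x y]. unfold Jc; destruct j as [|[|[|[|j]]]]; simpl; ring. Qed.

Lemma Cmod_cossin t : Cmod (cos t, sin t) = 1.
Proof. unfold Cmod. simpl. transitivity (sqrt 1); [f_equal|apply sqrt_1].
  pose proof (sin2_cos2 t). unfold Rsqr in H. nra. Qed.

Definition ek (k : nat) : pt := mkpt (fun j => if Nat.eqb j k then 1 else 0).

Section Inv.
Variable gamma : oneform.
Hypothesis Hsm : forall j, (j < 4)%nat -> smooth_away (gamma j).
Hypothesis HS1 : forall l : C, Cmod l = 1 -> form1_inv (s1act l) gamma.

Lemma inv_deriv q v : q <> pt0 ->
  sum4 (fun j => sum4 (fun i => Jc q i * P gamma i j q) * coord v j + gamma j q * Jc v j) = 0.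
Proof.
  intros Hq.
  set (c := fun t => s1act (cos t, sin t) q).
  assert (Hc0 : c 0 = q).
  { apply pt_ext; intros j Hj. unfold c. rewrite coord_s1act. simpl. rewrite cos_0, sin_0. ring. }
  assert (Hdc : forall k, (k < 4)%nat -> is_derive (fun t => coord (c t) k) 0 (Jc q k)).
  { intros k Hk. unfold c. apply (is_derive_ext (fun t => cos t * coord q k + sin t * Jc q k)).
    { intros t. rewrite coord_s1act. reflexivity. }
    auto_derive; auto. rewrite cos_0, sin_0. ring. }
  assert (Hg : forall j, (j < 4)%nat -> is_derive (fun t => gamma j (c t)) 0 (sum4 (fun i => Jc q i * P gamma i j q))).
  { intros j Hj. pose proof (chain_rule (gamma j) c 0 (fun k => Jc q k) (Hsm j Hj)) as H.
    rewrite Hc0 in H. apply H; auto. }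
  assert (Hv : forall j, is_derive (fun t => coord (s1act (cos t, sin t) v) j) 0 (Jc v j)).
  { intros j. apply (is_derive_ext (fun t => cos t * coord v j + sin t * Jc v j)).
    { intros t. rewrite coord_s1act. reflexivity. }
    auto_derive; auto. rewrite cos_0, sin_0. ring. }
  assert (Hj : forall j, (j < 4)%nat -> is_derive (fun t => gamma j (c t) * coord (s1act (cos t, sin t) v) j) 0
      (sum4 (fun i => Jc q i * P gamma i j q) * coord v j + gamma j q * Jc v j)).
  { intros j Hj. pose proof (is_derive_mult _ _ 0 _ _ (Hg j Hj) (Hv j) Rmult_comm) as H.
    cbv beta in H. replace (coord (s1act (cos 0, sin 0) v) j) with (coord v j) in H
      by (rewrite coord_s1act; simpl; rewrite cos_0, sin_0; ring).
    rewrite Hc0 in H. exact H. }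
  pose proof (is_derive_plus _ _ _ _ _ (is_derive_plus _ _ _ _ _ (is_derive_plus _ _ _ _ _
     (Hj 0%nat ltac:(lia)) (Hj 1%nat ltac:(lia))) (Hj 2%nat ltac:(lia))) (Hj 3%nat ltac:(lia))) as HD.
  assert (HC : forall t, plus (plus (plus (gamma 0%nat (c t) * coord (s1act (cos t, sin t) v) 0)
     (gamma 1%nat (c t) * coord (s1act (cos t, sin t) v) 1)) (gamma 2%nat (c t) * coord (s1act (cos t, sin t) v) 2))
     (gamma 3%nat (c t) * coord (s1act (cos t, sin t) v) 3) = eval1 gamma q v).
  { intros t. rewrite <- (HS1 (cos t, sin t) (Cmod_cossin t) q v Hq). reflexivity. }
  apply (is_derive_ext _ (fun _ => eval1 gamma q v)) in HD; [|exact HC].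
  apply is_derive_unique in HD. rewrite Derive_const in HD. unfold sum4. rewrite HD. reflexivity.
Qed.
End Inv.

Lemma Jmul z w : ((Ci * z) * Cconj (Ci * w))%C = (z * Cconj w)%C.
Proof. destruct z as [a b], w as [c d]. unfold Cmult, Cconj, Ci. simpl. f_equal; ring. Qed.

Lemma zc_s1act l u a : zc (s1act l u) a = (l * zc u a)%C.
Proof. destruct a as [|a]; reflexivity. Qed.

Lemma dzdzb_J a b u v : dzdzb a b (s1act Ci u) (s1act Ci v) = dzdzb a b u v.
Proof. unfold dzdzb. rewrite !zc_s1act, !Jmul. reflexivity. Qed.

Section J.
Variable gamma : oneform.
Hypothesis H11 : type11 (dform1 gamma).

Lemma Jinv q u v : q <> pt0 -> dform1 gamma q (s1act Ci u) (s1act Ci v) = dform1 gamma q u v.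
Proof.
  intros Hq. destruct (H11 q Hq) as [h Hh].
  pose proof (Hh (s1act Ci u) (s1act Ci v)) as H1. pose proof (Hh u v) as H2.
  unfold sum2C in H1. rewrite !dzdzb_J in H1. unfold sum2C in H2. rewrite <- H2 in H1.
  apply (f_equal fst) in H1. simpl in H1. exact H1.
Qed.

Lemma Rel1 q : q <> pt0 -> P gamma 0 2 q - P gamma 2 0 q = P gamma 1 3 q - P gamma 3 1 q.
Proof.
  intros Hq. pose proof (Jinv q (ek 0) (ek 2) Hq) as H.
  unfold dform1, sum4, ek, mkpt in H. simpl in H. unfold P. lra.
Qed.

Lemma Rel2 q : q <> pt0 -> P gamma 0 3 q - P gamma 3 0 q = - (P gamma 1 2 q - P gamma 2 1 q).
Proof.
  intros Hq. pose proof (Jinv q (ek 0) (ek 3) Hq) as H.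
  unfold dform1, sum4, ek, mkpt in H. simpl in H. unfold P. lra.
Qed.
End J.

Lemma partial_sum4 (h : nat -> pt -> R) j q : (forall i, (i < 4)%nat -> smooth_away (h i)) ->
  (j < 4)%nat -> q <> pt0 ->
  partial j (fun q => sum4 (fun i => h i q)) q = sum4 (fun i => partial j (h i) q).
Proof.
  intros Hs Hj Hq. unfold partial at 1. apply is_derive_unique. unfold sum4.
  exact (is_derive_plus _ _ _ _ _ (is_derive_plus _ _ _ _ _ (is_derive_plus _ _ _ _ _
     (is_derive_Dl_0 (h 0%nat) nil q j (Hs 0%nat ltac:(lia)) Hj Hq)
     (is_derive_Dl_0 (h 1%nat) nil q j (Hs 1%nat ltac:(lia)) Hj Hq))
     (is_derive_Dl_0 (h 2%nat) nil q j (Hs 2%nat ltac:(lia)) Hj Hq))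
     (is_derive_Dl_0 (h 3%nat) nil q j (Hs 3%nat ltac:(lia)) Hj Hq)).
Qed.

Definition Hf gamma q i j := Dl (i :: j :: nil) (fpot gamma) q.
Definition cc (H : nat -> nat -> R) j k := Jsgn k * H j (Jidx k).
Definition Qf (H : nat -> nat -> R) (u v : pt) :=
  / 2 * sum4 (fun j => sum4 (fun k => cc H j k * (coord u j * coord v k - coord u k * coord v j))).
Definition dD2 (gamma : oneform) i q u v :=
  sum4 (fun j => sum4 (fun k => Dl (i :: j :: nil) (gamma k) q * (coord u j * coord v k - coord u k * coord v j))).

Section Main.
Variable gamma : oneform.
Hypothesis Hsm : forall j, (j < 4)%nat -> smooth_away (gamma j).
Hypothesis HS1 : forall l : C, Cmod l = 1 -> form1_inv (s1act l) gamma.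
Hypothesis H11 : type11 (dform1 gamma).

Lemma partial_fpot2 q m : q <> pt0 -> (m < 4)%nat ->
  partial m (fpot gamma) q = sum4 (fun i => Jc q i * (P gamma m i q - P gamma i m q)).
Proof.
  intros Hq Hm. rewrite partial_fpot by auto. pose proof (inv_deriv gamma Hsm HS1 q (ek m) Hq) as S.
  destruct m as [|[|[|[|m]]]]; try lia; unfold sum4, Jc, Jsgn, Jidx, ek, mkpt in *; simpl in *; lra.
Qed.

Lemma c_ident q k : q <> pt0 -> (k < 4)%nat ->
  Jsgn k * partial (Jidx k) (fpot gamma) q = sum4 (fun i => coord q i * (P gamma i k q - P gamma k i q)).
Proof.
  intros Hq Hk. assert (HJ : (Jidx k < 4)%nat) by (destruct k as [|[|[|[|k]]]]; simpl; lia).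
  rewrite partial_fpot2 by auto.
  pose proof (Rel1 gamma H11 q Hq) as E1. pose proof (Rel2 gamma H11 q Hq) as E2.
  assert (F1 : P gamma 3 1 q = P gamma 1 3 q - P gamma 0 2 q + P gamma 2 0 q) by lra.
  assert (F2 : P gamma 3 0 q = P gamma 0 3 q + P gamma 1 2 q - P gamma 2 1 q) by lra.
  destruct k as [|[|[|[|k]]]]; try lia; unfold sum4, Jc, Jsgn, Jidx; simpl; rewrite ?F1, ?F2; ring.
Qed.

Lemma partial_mulc_lin q i j k : q <> pt0 -> (i < 4)%nat -> (j < 4)%nat -> (k < 4)%nat ->
  partial j (mulc i (lin 1 (-1) (P gamma i k) (P gamma k i))) q =
  (if Nat.eqb j i then P gamma i k q - P gamma k i q else 0) +
  coord q i * (Dl (j :: i :: nil) (gamma k) q - Dl (j :: k :: nil) (gamma i) q).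
Proof.
  intros Hq Hi Hj Hk.
  assert (S1 : smooth_away (P gamma i k)) by exact (smooth_Dl (gamma k) (i :: nil) (Hsm k Hk)).
  assert (S2 : smooth_away (P gamma k i)) by exact (smooth_Dl (gamma i) (k :: nil) (Hsm i Hi)).
  change (partial j ?X q) with (Dl (j :: nil) X q).
  rewrite mulc_formula; auto; [|unfold lin; apply smooth_lin; auto].
  unfold RHS. unfold lin. rewrite Dl_lin by auto. simpl Lc.
  destruct (Nat.eqb j i); simpl; unfold sumL, P; simpl;
  change (fun q0 : pt => partial i (gamma k) q0) with (partial i (gamma k));
  change (fun q0 : pt => partial k (gamma i) q0) with (partial k (gamma i)); ring.
Qed.

Lemma dc_ident q j k : q <> pt0 -> (j < 4)%nat -> (k < 4)%nat ->
  Jsgn k * Dl (j :: Jidx k :: nil) (fpot gamma) q =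
  sum4 (fun i => (if Nat.eqb j i then P gamma i k q - P gamma k i q else 0) +
     coord q i * (Dl (j :: i :: nil) (gamma k) q - Dl (j :: k :: nil) (gamma i) q)).
Proof.
  intros Hq Hj Hk.
  transitivity (partial j (fun q => Jsgn k * partial (Jidx k) (fpot gamma) q) q).
  { unfold partial at 1. rewrite Derive_scal. reflexivity. }
  set (CI := fun q => sum4 (fun i => mulc i (lin 1 (-1) (P gamma i k) (P gamma k i)) q)).
  transitivity (partial j CI q).
  { unfold partial at 1 3. apply Derive_ext_loc.
    eapply filter_imp; [|apply (locally_shift_nonzero q j Hq Hj)]. intros t Ht.
    cbv beta in Ht. rewrite c_ident; auto. unfold CI, mulc, lin. unfold sum4. ring. }
  unfold CI. rewrite partial_sum4; auto.
  - unfold sum4. rewrite !partial_mulc_lin by (auto; lia). reflexivity.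
  - intros i Hi. apply smooth_mulc; auto. unfold lin. apply smooth_lin.
    + exact (smooth_Dl (gamma k) (i :: nil) (Hsm k Hk)).
    + exact (smooth_Dl (gamma i) (k :: nil) (Hsm i Hi)).
Qed.

Lemma pointwise q u v : q <> pt0 ->
  Qf (Hf gamma q) u v = dform1 gamma q u v + / 2 * sum4 (fun i => coord q i * dD2 gamma i q u v).
Proof.
  intros Hq.
  assert (DC : forall j k, (j < 4)%nat -> (k < 4)%nat -> Jsgn k * Dl (j :: Jidx k :: nil) (fpot gamma) q =
    sum4 (fun i => (if Nat.eqb j i then P gamma i k q - P gamma k i q else 0) +
     coord q i * (Dl (j :: i :: nil) (gamma k) q - Dl (j :: k :: nil) (gamma i) q)))
   by (intros; apply dc_ident; auto).
  assert (SW : forall k i j, (k < 4)%nat -> (i < 4)%nat -> (j < 4)%nat ->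
     partial j (partial i (gamma k)) q = partial i (partial j (gamma k)) q).
  { intros k i j Hk Hi Hj. exact (schwarz (gamma k) q j i (Hsm k Hk) Hq Hj Hi). }
  unfold Qf, cc, Hf. unfold sum4 at 1 2. cbv beta.
  rewrite !DC by lia.
  unfold dform1, dD2, sum4, P. simpl.
  rewrite ?(SW 0%nat 0%nat 1%nat) by lia.
  rewrite ?(SW 0%nat 0%nat 2%nat) by lia.
  rewrite ?(SW 0%nat 0%nat 3%nat) by lia.
  rewrite ?(SW 0%nat 1%nat 2%nat) by lia.
  rewrite ?(SW 0%nat 1%nat 3%nat) by lia.
  rewrite ?(SW 0%nat 2%nat 3%nat) by lia.
  rewrite ?(SW 1%nat 0%nat 1%nat) by lia.
  rewrite ?(SW 1%nat 0%nat 2%nat) by lia.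
  rewrite ?(SW 1%nat 0%nat 3%nat) by lia.
  rewrite ?(SW 1%nat 1%nat 2%nat) by lia.
  rewrite ?(SW 1%nat 1%nat 3%nat) by lia.
  rewrite ?(SW 1%nat 2%nat 3%nat) by lia.
  rewrite ?(SW 2%nat 0%nat 1%nat) by lia.
  rewrite ?(SW 2%nat 0%nat 2%nat) by lia.
  rewrite ?(SW 2%nat 0%nat 3%nat) by lia.
  rewrite ?(SW 2%nat 1%nat 2%nat) by lia.
  rewrite ?(SW 2%nat 1%nat 3%nat) by lia.
  rewrite ?(SW 2%nat 2%nat 3%nat) by lia.
  rewrite ?(SW 3%nat 0%nat 1%nat) by lia.
  rewrite ?(SW 3%nat 0%nat 2%nat) by lia.
  rewrite ?(SW 3%nat 0%nat 3%nat) by lia.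
  rewrite ?(SW 3%nat 1%nat 2%nat) by lia.
  rewrite ?(SW 3%nat 1%nat 3%nat) by lia.
  rewrite ?(SW 3%nat 2%nat 3%nat) by lia.
  field.
Qed.
End Main.

Lemma cauchy4 (a0 a1 a2 a3 b0 b1 b2 b3 : R) :
  a0*b0 + a1*b1 + a2*b2 + a3*b3 <=
  sqrt (a0^2 + a1^2 + a2^2 + a3^2) * sqrt (b0^2 + b1^2 + b2^2 + b3^2).
Proof.
  rewrite <- sqrt_mult by nra.
  destruct (Rle_dec (a0*b0 + a1*b1 + a2*b2 + a3*b3) 0) as [Hn|Hp].
  - pose proof (sqrt_pos ((a0^2 + a1^2 + a2^2 + a3^2) * (b0^2 + b1^2 + b2^2 + b3^2))). lra.
  - rewrite <- (sqrt_pow2 (a0*b0 + a1*b1 + a2*b2 + a3*b3)) by lra.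
    apply sqrt_le_1_alt.
    assert (0 <= (a0*b1 - a1*b0)^2 + (a0*b2 - a2*b0)^2 + (a0*b3 - a3*b0)^2 +
                 (a1*b2 - a2*b1)^2 + (a1*b3 - a3*b1)^2 + (a2*b3 - a3*b2)^2) by
      (repeat apply Rplus_le_le_0_compat; apply pow2_ge_0).
    nra.
Qed.

Lemma normpt_triang a b c : normpt (ptminus a c) <= normpt (ptminus a b) + normpt (ptminus b c).
Proof.
  unfold normpt, sum4. rewrite !coord_ptminus.
  set (x0 := coord a 0 - coord b 0); set (x1 := coord a 1 - coord b 1);
  set (x2 := coord a 2 - coord b 2); set (x3 := coord a 3 - coord b 3).
  set (y0 := coord b 0 - coord c 0); set (y1 := coord b 1 - coord c 1);
  set (y2 := coord b 2 - coord c 2); set (y3 := coord b 3 - coord c 3).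
  replace (coord a 0 - coord c 0) with (x0 + y0) by (unfold x0, y0; ring).
  replace (coord a 1 - coord c 1) with (x1 + y1) by (unfold x1, y1; ring).
  replace (coord a 2 - coord c 2) with (x2 + y2) by (unfold x2, y2; ring).
  replace (coord a 3 - coord c 3) with (x3 + y3) by (unfold x3, y3; ring).
  pose proof (cauchy4 x0 x1 x2 x3 y0 y1 y2 y3) as CS.
  pose proof (sqrt_pos (x0^2 + x1^2 + x2^2 + x3^2)). pose proof (sqrt_pos (y0^2 + y1^2 + y2^2 + y3^2)).
  rewrite <- (sqrt_pow2 (sqrt (x0^2 + x1^2 + x2^2 + x3^2) + sqrt (y0^2 + y1^2 + y2^2 + y3^2))) by lra.
  apply sqrt_le_1_alt.
  assert (E1 : sqrt (x0^2 + x1^2 + x2^2 + x3^2) ^ 2 = x0^2 + x1^2 + x2^2 + x3^2)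
    by (apply pow2_sqrt; nra).
  assert (E2 : sqrt (y0^2 + y1^2 + y2^2 + y3^2) ^ 2 = y0^2 + y1^2 + y2^2 + y3^2)
    by (apply pow2_sqrt; nra).
  nra.
Qed.

Lemma normpt_ptminus0 q : normpt (ptminus q pt0) = normpt q.
Proof. unfold normpt, sum4. rewrite !coord_ptminus. destruct q as [[a b] [c d]]; simpl. f_equal; ring. Qed.

Lemma normpt_sym a b : normpt (ptminus a b) = normpt (ptminus b a).
Proof. unfold normpt, sum4. rewrite !coord_ptminus. f_equal; ring. Qed.

Lemma normpt_lower p q : normpt p - normpt (ptminus q p) <= normpt q.
Proof.
  pose proof (normpt_triang p q pt0). rewrite !normpt_ptminus0 in H. rewrite normpt_sym in H. lra.
Qed.

Lemma sc_shift p i s t : sc t (shift p i s) = shift (sc t p) i (t * s).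
Proof.
  destruct p as [[a b] [c d]]. destruct i as [|[|[|[|i]]]]; unfold sc; simpl; f_equal; try f_equal; ring.
Qed.

Lemma sc_nonzero t p : t <> 0 -> p <> pt0 -> sc t p <> pt0.
Proof.
  intros Ht Hp E. assert (normpt (sc t p) = 0) by (rewrite E; apply normpt_zero_iff_rev || idtac; unfold normpt, sum4; simpl; transitivity (sqrt 0); [f_equal; ring|apply sqrt_0]).
  rewrite normpt_sc in H. pose proof (normpt_pos p Hp). pose proof (Rabs_pos_lt t Ht). nra.
Qed.

Section Kern.
Variable f : pt -> R.
Hypothesis Hs : smooth_away f.
Hypothesis Hd : decays f 2.

Definition Kl (l : list nat) (p : pt) (t : R) : R :=
  if Rlt_dec 0 t then / t ^ (S (length l)) * Dl l f (sc (/ t) p) else 0.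

Lemma Kl_bound k C R0 : (forall (l : list nat) (p : pt), length l = k -> p <> pt0 -> R0 <= normpt p ->
    Rabs (Dl l f p) <= C / normpt p ^ (2 + k)) ->
  forall l p t, length l = k -> p <> pt0 -> 0 < t -> R0 <= normpt p / t ->
  Rabs (Kl l p t) <= Rabs C * t / normpt p ^ (2 + k).
Proof.
  intros HB l p t Hl Hp Ht HR. unfold Kl. destruct (Rlt_dec 0 t) as [_|]; [|lra].
  assert (Hnp : 0 < normpt p) by (apply normpt_pos; auto).
  assert (Hsc : normpt (sc (/ t) p) = normpt p / t).
  { rewrite normpt_sc, Rabs_right by (left; apply Rinv_0_lt_compat; auto). unfold Rdiv; ring. }
  assert (Hsc0 : sc (/ t) p <> pt0) by (apply sc_nonzero; auto; apply Rinv_neq_0_compat; lra).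
  assert (HB' := HB l (sc (/ t) p) Hl Hsc0 ltac:(rewrite Hsc; exact HR)).
  rewrite Hsc in HB'. rewrite Rabs_mult.
  rewrite (Rabs_right (/ t ^ S (length l))) by (left; apply Rinv_0_lt_compat; apply pow_lt; auto).
  rewrite Hl in *.
  assert (Htk : 0 < t ^ S k) by (apply pow_lt; auto).
  assert (Hnk : 0 < normpt p ^ S k) by (apply pow_lt; auto).
  replace (normpt p / t) with (normpt p * / t) in HB' by reflexivity.
  rewrite Rpow_mult_distr, pow_inv in HB'.
  replace (2 + k)%nat with (S (S k)) in * by lia.
  change (normpt p ^ S (S k)) with (normpt p * normpt p ^ S k) in *.
  change (t ^ S (S k)) with (t * t ^ S k) in *.
  eapply Rle_trans. { apply Rmult_le_compat_l; [left; apply Rinv_0_lt_compat; auto|]. exact HB'. }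
  assert (E : / (t ^ S k) * (C / (normpt p * normpt p ^ S k * / (t * t ^ S k))) =
              C * t / (normpt p * normpt p ^ S k)) by (field; repeat split; lra).
  rewrite E. unfold Rdiv. apply Rmult_le_compat_r.
  - left; apply Rinv_0_lt_compat. apply Rmult_lt_0_compat; auto.
  - apply Rmult_le_compat_r; [lra|apply Rle_abs].
Qed.

Lemma cont_inv_pow n t0 : t0 <> 0 -> continuous (fun t : R => / t ^ n) t0.
Proof.
  intros H. apply (ex_derive_continuous (K := R_AbsRing) (V := R_NormedModule) (fun t : R => / t ^ n)).
  auto_derive. apply pow_nonzero; auto.
Qed.

Lemma cont_sc_pair (p : pt) (t0 : R) : t0 <> 0 ->
  continuous (fun z : pt * R => sc (/ snd z) (fst z)) (p, t0).
Proof.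
  intros Ht. apply cont_pt. intros j Hj.
  apply (continuous_ext (fun z : pt * R => / snd z * coord (fst z) j)).
  { intros z. rewrite coord_sc. reflexivity. }
  apply (cmult (fun z : pt * R => / snd z) (fun z => coord (fst z) j)).
  - apply (continuous_comp (fun z : pt * R => snd z) (fun t => / t)).
    + apply continuous_snd.
    + simpl. apply (continuous_ext (fun t : R => / t ^ 1)); [intros; simpl; rewrite Rmult_1_r; auto|].
      apply cont_inv_pow; auto.
  - apply (continuous_comp (fun z : pt * R => fst z) (fun q => coord q j)).
    + apply continuous_fst.
    + apply cont_coord.
Qed.

Lemma Kcont l p t0 : p <> pt0 -> 0 <= t0 ->
  continuous (fun z : pt * R => Kl l (fst z) (snd z)) (p, t0).
Proof.
  intros Hp Ht0. destruct Ht0 as [Ht0|Ht0].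
  -
    apply (continuous_ext_loc _ (fun z : pt * R => / snd z ^ S (length l) * Dl l f (sc (/ snd z) (fst z)))).
    + assert (Hh : 0 < t0 / 2) by lra. exists (mkposreal _ Hh). intros [q t] [_ Hb].
      change (Rabs (t - t0) < t0 / 2) in Hb. simpl. unfold Kl.
      destruct (Rlt_dec 0 t) as [_|Hn]; [reflexivity|]. exfalso. apply Hn. apply Rabs_def2 in Hb. lra.
    + apply (cmult (fun z : pt * R => / snd z ^ S (length l)) (fun z => Dl l f (sc (/ snd z) (fst z)))).
      * apply (continuous_comp (fun z : pt * R => snd z) (fun t => / t ^ S (length l))).
        -- apply continuous_snd.
        -- apply cont_inv_pow; simpl; lra.
      * apply (continuous_comp (fun z : pt * R => sc (/ snd z) (fst z)) (Dl l f)).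
        -- apply cont_sc_pair; lra.
        -- simpl. apply smooth_cont; auto. apply sc_nonzero; auto. apply Rinv_neq_0_compat; lra.
  - subst t0. apply filterlim_locally. intros eps.
    assert (Hnp : 0 < normpt p) by (apply normpt_pos; auto).
    destruct (Hd (length l)) as [C [R0 HB]].
    set (M := Rabs C / (normpt p / 2) ^ (2 + length l)).
    assert (HM : 0 <= M).
    { unfold M. apply Rmult_le_pos; [apply Rabs_pos|]. left. apply Rinv_0_lt_compat. apply pow_lt. lra. }
    assert (Hd1 : 0 < normpt p / 8) by lra.
    assert (Hd2 : 0 < eps / (M + 1)) by (apply Rdiv_lt_0_compat; [apply cond_pos|lra]).
    assert (Hd3 : 0 < normpt p / (2 * (Rabs R0 + 1))) by (apply Rdiv_lt_0_compat; [lra|pose proof (Rabs_pos R0); lra]).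
    set (d := Rmin (normpt p / 8) (Rmin (eps / (M + 1)) (normpt p / (2 * (Rabs R0 + 1))))).
    assert (Hdp : 0 < d) by (unfold d; repeat apply Rmin_pos; auto).
    exists (mkposreal _ Hdp). intros [q t] [Hbq Hbt]. simpl in Hbq, Hbt.
    change (Rabs (t - 0) < d) in Hbt. rewrite Rminus_0_r in Hbt.
    apply ball_R. simpl. unfold Kl at 2. destruct (Rlt_dec 0 0) as [H0|_]; [lra|].
    rewrite Rminus_0_r.
    assert (Hqp : normpt (ptminus q p) < normpt p / 2).
    { pose proof (proj1 (ball_pt _ _ _) Hbq) as Hb. simpl in Hb.
      eapply Rle_lt_trans; [apply normpt_le_sum|]. unfold sum4. rewrite !coord_ptminus.
      pose proof (Hb 0%nat ltac:(lia)); pose proof (Hb 1%nat ltac:(lia));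
      pose proof (Hb 2%nat ltac:(lia)); pose proof (Hb 3%nat ltac:(lia)).
      assert (d <= normpt p / 8) by apply Rmin_l. lra. }
    assert (Hq : normpt p / 2 <= normpt q) by (pose proof (normpt_lower p q); lra).
    assert (Hq0 : q <> pt0) by (apply (near_nonzero p); lra).
    destruct (Rlt_dec 0 t) as [Htp|Htn].
    + assert (HR : R0 <= normpt q / t).
      { assert (d <= normpt p / (2 * (Rabs R0 + 1))) by (unfold d; eapply Rle_trans; apply Rmin_r).
        assert (Ht' : t < normpt p / (2 * (Rabs R0 + 1))) by (apply Rabs_def2 in Hbt; lra).
        assert (normpt p / 2 / t >= Rabs R0 + 1).
        { apply Rle_ge. apply (Rmult_le_reg_r t); auto. unfold Rdiv at 1.
          rewrite Rmult_assoc, Rinv_l, Rmult_1_r by lra.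
          apply (Rmult_lt_compat_l (2 * (Rabs R0 + 1))) in Ht'; [|pose proof (Rabs_pos R0); lra].
          replace (2 * (Rabs R0 + 1) * (normpt p / (2 * (Rabs R0 + 1)))) with (normpt p) in Ht'
            by (field; pose proof (Rabs_pos R0); lra). lra. }
        assert (normpt p / 2 / t <= normpt q / t) by (apply Rmult_le_compat_r; [left; apply Rinv_0_lt_compat|]; lra).
        pose proof (Rle_abs R0). lra. }
      pose proof (Kl_bound (length l) C R0 HB l q t eq_refl Hq0 Htp HR) as Kb.
      eapply Rle_lt_trans; [exact Kb|].
      assert (Hpow : (normpt p / 2) ^ (2 + length l) <= normpt q ^ (2 + length l))
        by (apply pow_incr; lra).
      assert (Hpp : 0 < (normpt p / 2) ^ (2 + length l)) by (apply pow_lt; lra).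
      apply Rle_lt_trans with (M * t).
      * assert (Hi : / normpt q ^ (2 + length l) <= / (normpt p / 2) ^ (2 + length l))
          by (apply Rinv_le_contravar; auto).
        apply Rle_trans with (Rabs C * t * / (normpt p / 2) ^ (2 + length l)).
        -- unfold Rdiv at 1. apply Rmult_le_compat_l; [apply Rmult_le_pos; [apply Rabs_pos|lra]|exact Hi].
        -- right; unfold M; unfold Rdiv; ring.
      * assert (t < eps / (M + 1)) by (assert (d <= eps / (M + 1)) by (unfold d; eapply Rle_trans; [apply Rmin_r|apply Rmin_l]);
          apply Rabs_def2 in Hbt; lra).
        apply Rle_lt_trans with (M * (eps / (M + 1))).
        -- apply Rmult_le_compat_l; lra.
        -- assert (M * (eps / (M + 1)) = eps * (M / (M + 1))) by (field; lra). rewrite H0.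
           pose proof (cond_pos eps). assert (M / (M + 1) < 1) by (apply (Rmult_lt_reg_r (M + 1)); [lra|]; unfold Rdiv; rewrite Rmult_assoc, Rinv_l by lra; lra).
           nra.
    + unfold Kl. destruct (Rlt_dec 0 t); [contradiction|]. rewrite ?Rminus_0_r, Rabs_R0. apply cond_pos.
Qed.

Lemma Kl_deriv l p i s t : (i < 4)%nat -> shift p i s <> pt0 ->
  is_derive (fun u => Kl l (shift p i u) t) s (Kl (i :: l) (shift p i s) t).
Proof.
  intros Hi Hn. unfold Kl. destruct (Rlt_dec 0 t) as [Ht|Ht].
  - set (P' := sc (/ t) p).
    apply (is_derive_ext (fun u => / t ^ S (length l) * Dl l f (shift P' i (/ t * u)))).
    { intros u. unfold P'. rewrite sc_shift. reflexivity. }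
    assert (Hn' : shift P' i (/ t * s) <> pt0).
    { unfold P'. rewrite <- sc_shift. apply sc_nonzero; auto. apply Rinv_neq_0_compat; lra. }
    pose proof (is_derive_comp (fun v => Dl l f (shift P' i v)) (fun u => / t * u) s _ (/ t)
      (is_derive_Dl_shift f l P' i (/ t * s) Hs Hi Hn')) as H.
    assert (Hlin : is_derive (fun u : R => / t * u) s (/ t)) by (auto_derive; auto; ring).
    specialize (H Hlin).
    apply (is_derive_scal _ _ (/ t ^ S (length l))) in H.
    replace (/ t ^ S (length (i :: l)) * Dl (i :: l) f (sc (/ t) (shift p i s)))
      with (/ t ^ S (length l) * scal (/ t) (Dl (i :: l) f (shift P' i (/ t * s)))).
    + exact H.
    + unfold P'. rewrite <- sc_shift. change (scal (/ t) ?x) with (/ t * x).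
      simpl length. change (t ^ S (S (length l))) with (t * t ^ S (length l)).
      assert (0 < t ^ S (length l)) by (apply pow_lt; auto). field. split; lra.
  - apply (is_derive_const 0).
Qed.

Lemma cont_Kl_t l q z : q <> pt0 -> 0 <= z -> continuous (Kl l q) z.
Proof.
  intros Hq Hz.
  apply (continuous_comp_2 (fun _ : R => q) (fun t : R => t) (fun a b => Kl l a b) z).
  - apply continuous_const.
  - apply continuous_id.
  - apply Kcont; auto.
Qed.

Lemma Kl_exRInt l q : q <> pt0 -> ex_RInt (Kl l q) 0 1.
Proof.
  intros Hq. apply (ex_RInt_continuous (V := R_CompleteNormedModule)). intros z Hz. apply cont_Kl_t; auto.
  rewrite Rmin_left in Hz by lra. lra.
Qed.

Lemma cont_shift_fst p i : (i < 4)%nat -> continuous (fun z : R * R => shift p i (fst z)) (0, 0).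
Proof.
  intros Hi. apply cont_pt. intros j Hj.
  apply (continuous_ext (fun z : R * R => coord p j + (if Nat.eqb i j then fst z else 0))).
  { intros z. rewrite coord_shift by auto. reflexivity. }
  apply (cplus (fun _ => coord p j) (fun z : R * R => if Nat.eqb i j then fst z else 0)).
  - apply cconst.
  - destruct (Nat.eqb i j); [apply continuous_fst|apply cconst].
Qed.

Lemma cont_shift_fst' p i t : (i < 4)%nat -> continuous (fun z : R * R => shift p i (fst z)) (0, t).
Proof.
  intros Hi. apply cont_pt. intros j Hj.
  apply (continuous_ext (fun z : R * R => coord p j + (if Nat.eqb i j then fst z else 0))).
  { intros z. rewrite coord_shift by auto. reflexivity. }
  apply (cplus (fun _ => coord p j) (fun z : R * R => if Nat.eqb i j then fst z else 0)).
  - apply cconst.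
  - destruct (Nat.eqb i j); [apply continuous_fst|apply cconst].
Qed.

Lemma RInt_deriv l p i : p <> pt0 -> (i < 4)%nat ->
  is_derive (fun s => RInt (Kl l (shift p i s)) 0 1) 0 (RInt (Kl (i :: l) p) 0 1).
Proof.
  intros Hp Hi.
  pose proof (locally_shift_nonzero p i Hp Hi) as HL.
  assert (HD := is_derive_RInt_param (fun s t => Kl l (shift p i s) t) 0 1 0).
  rewrite Rmin_left, Rmax_right in HD by lra.
  replace (RInt (Kl (i :: l) p) 0 1) with (RInt (fun t => Derive (fun u => Kl l (shift p i u) t) 0) 0 1).
  - apply HD.
    + eapply filter_imp; [|exact HL]. intros x Hx t _. eexists. apply Kl_deriv; auto.
    + intros t Ht.
      destruct HL as [dl Hdl].
      apply continuity_2d_pt_ext_loc with (f := fun u v => Kl (i :: l) (shift p i u) v).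
      * exists dl. intros u v Hu _. symmetry. apply is_derive_unique. apply Kl_deriv; [exact Hi|].
        exact (Hdl u Hu).
      * apply continuity_2d_pt_filterlim.
        apply (continuous_comp_2 (fun z : R * R => shift p i (fst z)) (fun z : R * R => snd z)
                 (fun a b => Kl (i :: l) a b) (0, t)).
        -- apply cont_shift_fst'; auto.
        -- apply continuous_snd.
        -- simpl. rewrite shift_0. apply Kcont; auto; lra.
    + eapply filter_imp; [|exact HL]. intros x Hx. apply Kl_exRInt; auto.
  - apply RInt_ext. intros x _. apply is_derive_unique.
    pose proof (Kl_deriv l p i 0 x Hi ltac:(rewrite shift_0; auto)) as H. rewrite shift_0 in H. exact H.
Qed.
End Kern.

Section Psi.
Variable f : pt -> R.
Hypothesis Hs : smooth_away f.
Hypothesis Hd : decays f 2.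

Lemma ball_prod (p : pt) (t : R) e (q : pt) (s : R) : ball (p, t) e (q, s) <-> ball p e q /\ ball t e s.
Proof. reflexivity. Qed.

Lemma RInt_cont l p : p <> pt0 -> continuous (fun q => RInt (Kl f l q) 0 1) p.
Proof.
  intros Hp. apply filterlim_locally. intros eps.
  assert (He4 : 0 < eps / 4) by (pose proof (cond_pos eps); lra).
  assert (Hex : forall t, exists d : posreal, 0 <= t <= 1 ->
     forall q s, ball p d q -> Rabs (s - t) < d -> Rabs (Kl f l q s - Kl f l p t) < eps / 4).
  { intros t. destruct (classic (0 <= t <= 1)) as [Ht|Ht].
    - pose proof (Kcont f Hs Hd l p t Hp (proj1 Ht)) as HK.
      pose proof (proj1 (filterlim_locally (F := locally (p, t)) _ _) HK (mkposreal _ He4)) as [d Hd'].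
      exists d. intros _ q s Hq Hst. apply (Hd' (q, s)). split; auto.
    - exists (mkposreal 1 Rlt_0_1). intros H; contradiction. }
  set (delta := fun t => proj1_sig (constructive_indefinite_description _ (Hex t))).
  assert (Hdelta : forall t, 0 <= t <= 1 -> forall q s, ball p (delta t) q -> Rabs (s - t) < delta t ->
     Rabs (Kl f l q s - Kl f l p t) < eps / 4).
  { intros t. unfold delta. destruct (constructive_indefinite_description _ (Hex t)). simpl. auto. }
  destruct (compactness_value_1d 0 1 delta) as [d Hcd].
  pose proof (filter_and _ _ (locally_nonzero p Hp) (locally_ball p d)) as HL.
  eapply filter_imp; [|exact HL]. intros q [Hq Hbq].
  assert (Hpt : forall s, 0 <= s <= 1 -> Rabs (Kl f l q s - Kl f l p s) <= eps / 2).
  { intros s Hs'. apply NNPP. intros Hn. apply (Hcd s Hs'). intros [t [Ht [Hst Hdt]]].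
    apply Hn.
    assert (Hbq' : ball p (delta t) q) by (eapply ball_le; [exact Hdt|exact Hbq]).
    pose proof (Hdelta t Ht q s Hbq' Hst) as A1.
    pose proof (Hdelta t Ht p s (ball_center p _) Hst) as A2.
    replace (Kl f l q s - Kl f l p s) with ((Kl f l q s - Kl f l p t) - (Kl f l p s - Kl f l p t)) by ring.
    eapply Rle_trans; [apply Rabs_triang|]. rewrite Rabs_Ropp. lra. }
  apply ball_R.
  assert (E : RInt (Kl f l q) 0 1 - RInt (Kl f l p) 0 1 = RInt (fun s => Kl f l q s - Kl f l p s) 0 1).
  { symmetry. apply (RInt_minus (V := R_CompleteNormedModule)); apply Kl_exRInt; auto. }
  rewrite E.
  eapply Rle_lt_trans.
  - apply (abs_RInt_le_const _ 0 1 (eps / 2)); [lra| |].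
    + apply (ex_RInt_minus (V := R_NormedModule)); apply Kl_exRInt; auto.
    + intros s Hs'. apply Hpt. auto.
  - pose proof (cond_pos eps). lra.
Qed.

Definition psi_int (p : pt) : R := -2 * RInt (Kl f nil p) 0 1.

Lemma psi_formula l : forall p, p <> pt0 -> Dl l psi_int p = -2 * RInt (Kl f l p) 0 1.
Proof.
  induction l as [|i l IH]; intros p Hp; [reflexivity|].
  destruct (Nat.lt_ge_cases i 4) as [Hi|Hi].
  - apply (Dl_step_ext (fun q => -2 * RInt (Kl f l q) 0 1) (fun q => -2 * RInt (Kl f (i :: l) q) 0 1)); auto.
    apply is_derive_scal. apply RInt_deriv; auto.
  - rewrite Dl_ge4 by auto.
    rewrite (RInt_ext _ (fun _ => 0)).
    + rewrite RInt_const. change (scal (1 - 0) 0) with (Rmult (1 - 0) 0). rewrite Rmult_0_r, Rmult_0_r. reflexivity.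
    + intros x _. unfold Kl. destruct (Rlt_dec 0 x); [|reflexivity]. rewrite Dl_ge4 by auto. apply Rmult_0_r.
Qed.

Lemma smooth_psi : smooth_away psi_int.
Proof.
  intros l p Hp. split.
  - apply cont_at_iff. apply (continuous_ext_loc _ (fun q => -2 * RInt (Kl f l q) 0 1)).
    { eapply filter_imp; [|apply locally_nonzero; eauto]. intros q Hq. symmetry. apply psi_formula; auto. }
    apply (cmult (fun _ => -2) (fun q => RInt (Kl f l q) 0 1)); [apply cconst|]. apply RInt_cont; auto.
  - intros i Hi. eexists. eapply is_derive_ext_loc.
    { eapply filter_imp; [|apply (locally_shift_nonzero p i Hp Hi)]. intros t Ht. symmetry. apply psi_formula; auto. }
    apply is_derive_scal. apply RInt_deriv; auto.
Qed.

Lemma decays_psi : decays psi_int 2.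
Proof.
  intros k. destruct (Hd k) as [C [R0 HB]].
  exists (2 * Rabs C), R0. intros l p Hl Hp HR.
  rewrite psi_formula by auto.
  assert (Hnp : 0 < normpt p) by (apply normpt_pos; auto).
  assert (Hpk : 0 < normpt p ^ (2 + k)) by (apply pow_lt; auto).
  rewrite Rabs_mult. replace (Rabs (-2)) with 2 by (rewrite Rabs_left by lra; ring).
  unfold Rdiv. rewrite Rmult_assoc. apply Rmult_le_compat_l; [lra|].
  replace (Rabs C * / normpt p ^ (2 + k)) with ((1 - 0) * (Rabs C * / normpt p ^ (2 + k))) by ring.
  apply abs_RInt_le_const; [lra| apply Kl_exRInt; auto|].
  intros t Ht. destruct (Rlt_dec 0 t) as [Htp|Htn].
  - eapply Rle_trans; [apply (Kl_bound f k C R0 HB l p t Hl Hp Htp)|].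
    + apply Rle_trans with (normpt p); auto.
      unfold Rdiv. rewrite <- (Rmult_1_r (normpt p)) at 1. apply Rmult_le_compat_l; [lra|].
      rewrite <- Rinv_1. apply Rinv_le_contravar; lra.
    + unfold Rdiv. rewrite (Rmult_comm (Rabs C) t), Rmult_assoc.
      rewrite <- (Rmult_1_l (Rabs C * / normpt p ^ (2 + k))) at 2.
      apply Rmult_le_compat_r; [|lra]. apply Rmult_le_pos; [apply Rabs_pos|left; apply Rinv_0_lt_compat; auto].
  - unfold Kl. destruct (Rlt_dec 0 t); [contradiction|]. rewrite Rabs_R0.
    apply Rmult_le_pos; [apply Rabs_pos|left; apply Rinv_0_lt_compat; auto].
Qed.
End Psi.

Lemma iddbar_Q (g : pt -> R) p u v :
  (forall i j, (i < 4)%nat -> (j < 4)%nat -> Dl (i :: j :: nil) g p = Dl (j :: i :: nil) g p) ->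
  i_ddbar g p u v = RtoC (Qf (fun i j => Dl (i :: j :: nil) g p) u v).
Proof.
  intros SY.
  assert (S01 := SY 1%nat 0%nat ltac:(lia) ltac:(lia)). assert (S02 := SY 2%nat 0%nat ltac:(lia) ltac:(lia)).
  assert (S03 := SY 3%nat 0%nat ltac:(lia) ltac:(lia)). assert (S12 := SY 2%nat 1%nat ltac:(lia) ltac:(lia)).
  assert (S13 := SY 3%nat 1%nat ltac:(lia) ltac:(lia)). assert (S23 := SY 3%nat 2%nat ltac:(lia) ltac:(lia)).
  unfold i_ddbar, Qf, cc, sum2C, d_z_zb, dzdzb, zc, sum4, Jsgn, Jidx. simpl Nat.mul. simpl Nat.add.
  rewrite S01, S02, S03, S12, S13, S23.
  destruct u as [[u0 u1] [u2 u3]], v as [[v0 v1] [v2 v3]].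
  unfold RtoC, Cmult, Cplus, Cminus, Copp, Cconj, Ci. simpl.
  f_equal; field.
Qed.

Lemma is_derive_sum4 (h : nat -> R -> R) t (d : nat -> R) :
  (forall i, (i < 4)%nat -> is_derive (h i) t (d i)) -> is_derive (fun x => sum4 (fun i => h i x)) t (sum4 d).
Proof.
  intros H. unfold sum4.
  exact (is_derive_plus _ _ _ _ _ (is_derive_plus _ _ _ _ _ (is_derive_plus _ _ _ _ _
     (H 0%nat ltac:(lia)) (H 1%nat ltac:(lia))) (H 2%nat ltac:(lia))) (H 3%nat ltac:(lia))).
Qed.

Lemma ex_RInt_sum4 (h : nat -> R -> R) a b : (forall i, (i < 4)%nat -> ex_RInt (h i) a b) ->
  ex_RInt (fun x => sum4 (fun i => h i x)) a b.
Proof.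
  intros H. unfold sum4.
  apply (ex_RInt_plus (V := R_NormedModule) (fun x => h 0%nat x + h 1%nat x + h 2%nat x) (h 3%nat)); [|apply H; lia].
  apply (ex_RInt_plus (V := R_NormedModule) (fun x => h 0%nat x + h 1%nat x) (h 2%nat)); [|apply H; lia].
  apply (ex_RInt_plus (V := R_NormedModule) (h 0%nat) (h 1%nat)); apply H; lia.
Qed.

Lemma RInt_sum4 (h : nat -> R -> R) a b : (forall i, (i < 4)%nat -> ex_RInt (h i) a b) ->
  RInt (fun x => sum4 (fun i => h i x)) a b = sum4 (fun i => RInt (h i) a b).
Proof.
  intros H. unfold sum4.
  assert (E01 : ex_RInt (fun x => h 0%nat x + h 1%nat x) a b)
    by (apply (ex_RInt_plus (V := R_NormedModule) (h 0%nat) (h 1%nat)); apply H; lia).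
  assert (E012 : ex_RInt (fun x => h 0%nat x + h 1%nat x + h 2%nat x) a b)
    by (apply (ex_RInt_plus (V := R_NormedModule) (fun x => h 0%nat x + h 1%nat x) (h 2%nat)); [exact E01|apply H; lia]).
  rewrite (RInt_plus (V := R_CompleteNormedModule) (fun x => h 0%nat x + h 1%nat x + h 2%nat x) (h 3%nat)); [|exact E012|apply H; lia].
  rewrite (RInt_plus (V := R_CompleteNormedModule) (fun x => h 0%nat x + h 1%nat x) (h 2%nat)); [|exact E01|apply H; lia].
  rewrite (RInt_plus (V := R_CompleteNormedModule) (h 0%nat) (h 1%nat)); [|apply H; lia|apply H; lia].
  reflexivity.
Qed.

Definition coefQ (u v : pt) (j k : nat) := / 2 * Jsgn k * (coord u j * coord v k - coord u k * coord v j).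

Lemma Qf_lin H u v : Qf H u v = sum4 (fun j => sum4 (fun k => coefQ u v j k * H j (Jidx k))).
Proof. unfold Qf, cc, coefQ, sum4. ring. Qed.

Lemma Qf_scal c H u v : Qf (fun i j => c * H i j) u v = c * Qf H u v.
Proof. rewrite !Qf_lin. unfold sum4. ring. Qed.

Lemma RInt_Qf (g : nat -> nat -> R -> R) u v :
  (forall i j, (i < 4)%nat -> (j < 4)%nat -> ex_RInt (g i j) 0 1) ->
  Qf (fun i j => RInt (g i j) 0 1) u v = RInt (fun t => Qf (fun i j => g i j t) u v) 0 1.
Proof.
  intros Hg. rewrite Qf_lin.
  rewrite (RInt_ext _ (fun t => sum4 (fun j => sum4 (fun k => coefQ u v j k * g j (Jidx k) t)))).
  2:{ intros x _. rewrite Qf_lin. reflexivity. }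
  assert (HJ : forall k, (k < 4)%nat -> (Jidx k < 4)%nat) by (intros k Hk; destruct k as [|[|[|[|k]]]]; simpl; lia).
  assert (E1 : forall j k, (j < 4)%nat -> (k < 4)%nat -> ex_RInt (fun t => coefQ u v j k * g j (Jidx k) t) 0 1).
  { intros j k Hj Hk. apply (ex_RInt_scal (V := R_NormedModule) (g j (Jidx k))). apply Hg; auto. }
  rewrite (RInt_sum4 (fun j t => sum4 (fun k => coefQ u v j k * g j (Jidx k) t))).
  2:{ intros j Hj. apply (ex_RInt_sum4 (fun k t => coefQ u v j k * g j (Jidx k) t)). intros k Hk. apply E1; auto. }
  assert (E2 : forall j, (j < 4)%nat -> RInt (fun t => sum4 (fun k => coefQ u v j k * g j (Jidx k) t)) 0 1 =
     sum4 (fun k => coefQ u v j k * RInt (g j (Jidx k)) 0 1)).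
  { intros j Hj. rewrite (RInt_sum4 (fun k t => coefQ u v j k * g j (Jidx k) t)); [|intros k Hk; apply E1; auto].
    unfold sum4.
    rewrite !(RInt_scal (V := R_CompleteNormedModule)) by (apply Hg; auto; simpl; lia). reflexivity. }
  symmetry. unfold sum4 at 1. cbv beta. rewrite !E2 by lia. reflexivity.
Qed.

Lemma abs_sum4 (h : nat -> R) : Rabs (sum4 h) <= sum4 (fun i => Rabs (h i)).
Proof.
  unfold sum4. eapply Rle_trans; [apply Rabs_triang|]. apply Rplus_le_compat_r.
  eapply Rle_trans; [apply Rabs_triang|]. apply Rplus_le_compat_r. apply Rabs_triang.
Qed.

Section Final.
Variable gamma : oneform.
Hypothesis Hsm : forall j, (j < 4)%nat -> smooth_away (gamma j).
Hypothesis HS1 : forall l : C, Cmod l = 1 -> form1_inv (s1act l) gamma.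
Hypothesis H11 : type11 (dform1 gamma).
Hypothesis Hdec : forall j, (j < 4)%nat -> decays (gamma j) 3.

Definition ff := fpot gamma.
Lemma Hs_ff : smooth_away ff. Proof. apply smooth_fpot; auto. Qed.
Lemma Hd_ff : decays ff 2. Proof. apply decays_fpot; auto. Qed.

Lemma dform_bound u v : exists C R0, forall q, q <> pt0 -> R0 <= normpt q ->
  Rabs (dform1 gamma q u v) <= C / normpt q ^ 4.
Proof.
  destruct (Hdec 0%nat ltac:(lia) 1%nat) as [C0 [R0 H0]].
  destruct (Hdec 1%nat ltac:(lia) 1%nat) as [C1 [R1 H1]].
  destruct (Hdec 2%nat ltac:(lia) 1%nat) as [C2 [R2 H2]].
  destruct (Hdec 3%nat ltac:(lia) 1%nat) as [C3 [R3 H3]].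
  set (Cm := Rabs C0 + Rabs C1 + Rabs C2 + Rabs C3).
  set (W := sum4 (fun i => sum4 (fun j => Rabs (coord u i * coord v j - coord u j * coord v i)))).
  exists (Cm * W), (Rmax (Rmax R0 R1) (Rmax R2 R3)). intros q Hq HR.
  assert (Hnq : 0 < normpt q ^ 4) by (apply pow_lt; apply normpt_pos; auto).
  assert (HP : forall i j, (j < 4)%nat -> Rabs (partial i (gamma j) q) <= Cm / normpt q ^ 4).
  { intros i j Hj.
    assert (A : forall Cj Rj, (forall l p, length l = 1%nat -> p <> pt0 -> Rj <= normpt p ->
        Rabs (Dl l (gamma j) p) <= Cj / normpt p ^ (3 + 1)) -> Rj <= normpt q -> Rabs Cj <= Cm ->
        Rabs (partial i (gamma j) q) <= Cm / normpt q ^ 4).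
    { intros Cj Rj HB HRj HC. eapply Rle_trans; [apply (HB (i :: nil)); auto|].
      unfold Rdiv. apply Rmult_le_compat_r; [left; apply Rinv_0_lt_compat; auto|].
      eapply Rle_trans; [apply Rle_abs|exact HC]. }
    assert (Rabs C0 <= Cm) by (unfold Cm; pose proof (Rabs_pos C1); pose proof (Rabs_pos C2); pose proof (Rabs_pos C3); lra).
    assert (Rabs C1 <= Cm) by (unfold Cm; pose proof (Rabs_pos C0); pose proof (Rabs_pos C2); pose proof (Rabs_pos C3); lra).
    assert (Rabs C2 <= Cm) by (unfold Cm; pose proof (Rabs_pos C1); pose proof (Rabs_pos C0); pose proof (Rabs_pos C3); lra).
    assert (Rabs C3 <= Cm) by (unfold Cm; pose proof (Rabs_pos C1); pose proof (Rabs_pos C2); pose proof (Rabs_pos C0); lra).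
    pose proof (Rmax_l (Rmax R0 R1) (Rmax R2 R3)); pose proof (Rmax_r (Rmax R0 R1) (Rmax R2 R3)).
    pose proof (Rmax_l R0 R1); pose proof (Rmax_r R0 R1); pose proof (Rmax_l R2 R3); pose proof (Rmax_r R2 R3).
    destruct j as [|[|[|[|j]]]]; try lia.
    - apply (A C0 R0 H0); auto; lra.
    - apply (A C1 R1 H1); auto; lra.
    - apply (A C2 R2 H2); auto; lra.
    - apply (A C3 R3 H3); auto; lra. }
  unfold dform1. eapply Rle_trans; [apply abs_sum4|].
  apply Rle_trans with (sum4 (fun i => sum4 (fun j => Cm / normpt q ^ 4 * Rabs (coord u i * coord v j - coord u j * coord v i)))).
  - apply sum4_le. intros i Hi. eapply Rle_trans; [apply abs_sum4|]. apply sum4_le. intros j Hj.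
    rewrite Rabs_mult. apply Rmult_le_compat_r; [apply Rabs_pos|]. apply HP; auto.
  - right. unfold W, sum4. unfold Rdiv. ring.
Qed.
End Final.

Section Final2.
Variable gamma : oneform.
Hypothesis Hsm : forall j, (j < 4)%nat -> smooth_away (gamma j).
Hypothesis HS1 : forall l : C, Cmod l = 1 -> form1_inv (s1act l) gamma.
Hypothesis H11 : type11 (dform1 gamma).
Hypothesis Hdec : forall j, (j < 4)%nat -> decays (gamma j) 3.

Let f := ff gamma.
Let Hs : smooth_away f := Hs_ff gamma Hsm.
Let Hd : decays f 2 := Hd_ff gamma Hsm Hdec.

Definition Psi := psi_int f.

Lemma Qpsi p u v : p <> pt0 ->
  Qf (fun i j => Dl (i :: j :: nil) Psi p) u v =
  RInt (fun t => -2 * Qf (fun i j => Kl f (i :: j :: nil) p t) u v) 0 1.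
Proof.
  intros Hp.
  replace (fun i j => Dl (i :: j :: nil) Psi p) with (fun i j => RInt (fun t => -2 * Kl f (i :: j :: nil) p t) 0 1).
  2:{ apply functional_extensionality; intros i; apply functional_extensionality; intros j.
      unfold Psi. rewrite psi_formula; auto.
      rewrite (RInt_scal (V := R_CompleteNormedModule)); [reflexivity|]. apply Kl_exRInt; auto. }
  rewrite (RInt_Qf (fun i j t => -2 * Kl f (i :: j :: nil) p t)).
  - apply RInt_ext. intros x _. rewrite Qf_scal. reflexivity.
  - intros i j _ _. apply (ex_RInt_scal (V := R_NormedModule) (Kl f (i :: j :: nil) p)). apply Kl_exRInt; auto.
Qed.

Lemma QI_pointwise p t u v : p <> pt0 -> 0 < t ->
  Qf (fun i j => Kl f (i :: j :: nil) p t) u v =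
  / t ^ 3 * (dform1 gamma (sc (/ t) p) u v +
    / 2 * sum4 (fun i => coord (sc (/ t) p) i * dD2 gamma i (sc (/ t) p) u v)).
Proof.
  intros Hp Ht. unfold Kl. destruct (Rlt_dec 0 t) as [_|]; [|lra]. simpl length.
  rewrite (Qf_scal (/ t ^ 3) (fun i j => Dl (i :: j :: nil) f (sc (/ t) p))).
  f_equal. apply (pointwise gamma Hsm HS1 H11). apply sc_nonzero; auto. apply Rinv_neq_0_compat; lra.
Qed.

Lemma QI_zero p u v t : t <= 0 -> Qf (fun i j => Kl f (i :: j :: nil) p t) u v = 0.
Proof.
  intros Ht. rewrite Qf_lin. unfold Kl. destruct (Rlt_dec 0 t); [lra|]. unfold sum4. ring.
Qed.

Lemma is_derive_mult_R (g h : R -> R) x dg dh : is_derive g x dg -> is_derive h x dh ->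
  is_derive (fun t => g t * h t) x (dg * h x + g x * dh).
Proof. intros H1 H2. exact (is_derive_mult g h x dg dh H1 H2 Rmult_comm). Qed.

Lemma Phi_deriv0 p u v : p <> pt0 ->
  is_derive (fun t => if Rlt_dec 0 t then / t ^ 2 * dform1 gamma (sc (/ t) p) u v else 0) 0 0.
Proof.
  intros Hp. apply is_derive_Reals. intros eps Heps.
  destruct (dform_bound gamma Hdec u v) as [C [R0 HB]].
  assert (Hnp : 0 < normpt p) by (apply normpt_pos; auto).
  assert (Hn4 : 0 < normpt p ^ 4) by (apply pow_lt; auto).
  assert (HC : 0 <= Rabs C) by apply Rabs_pos.
  assert (Hd1 : 0 < normpt p / (Rabs R0 + 1)) by (apply Rdiv_lt_0_compat; [lra|pose proof (Rabs_pos R0); lra]).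
  assert (Hd2 : 0 < eps * normpt p ^ 4 / (Rabs C + 1)) by (apply Rdiv_lt_0_compat; [nra|lra]).
  exists (mkposreal _ (Rmin_pos _ _ Hd1 Hd2)). intros h Hh0 Hhd.
  change (Rabs h < Rmin (normpt p / (Rabs R0 + 1)) (eps * normpt p ^ 4 / (Rabs C + 1))) in Hhd.
  rewrite Rplus_0_l. destruct (Rlt_dec 0 0) as [H0|_]; [lra|].
  destruct (Rlt_dec 0 h) as [Hh|Hh].
  - assert (Hq : sc (/ h) p <> pt0) by (apply sc_nonzero; auto; apply Rinv_neq_0_compat; lra).
    assert (Hnq : normpt (sc (/ h) p) = normpt p / h).
    { rewrite normpt_sc, Rabs_right by (left; apply Rinv_0_lt_compat; auto). unfold Rdiv; ring. }
    assert (Hh1 : h < normpt p / (Rabs R0 + 1)) by (apply Rabs_def2 in Hhd; pose proof (Rmin_l (normpt p / (Rabs R0 + 1)) (eps * normpt p ^ 4 / (Rabs C + 1))); lra).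
    assert (Hh2 : h < eps * normpt p ^ 4 / (Rabs C + 1)) by (apply Rabs_def2 in Hhd; pose proof (Rmin_r (normpt p / (Rabs R0 + 1)) (eps * normpt p ^ 4 / (Rabs C + 1))); lra).
    assert (HR : R0 <= normpt (sc (/ h) p)).
    { rewrite Hnq. pose proof (Rle_abs R0).
      apply (Rmult_lt_compat_r (Rabs R0 + 1)) in Hh1; [|pose proof (Rabs_pos R0); lra].
      unfold Rdiv in Hh1. rewrite Rmult_assoc, Rinv_l, Rmult_1_r in Hh1 by (pose proof (Rabs_pos R0); lra).
      apply Rle_trans with (Rabs R0 + 1); [lra|].
      apply (Rmult_le_reg_r h); auto. unfold Rdiv. rewrite Rmult_assoc, Rinv_l, Rmult_1_r by lra. lra. }
    pose proof (HB _ Hq HR) as Bd. rewrite Hnq in Bd.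
    set (D := dform1 gamma (sc (/ h) p) u v) in *.
    replace ((/ h ^ 2 * D - 0) / h - 0) with (D / h ^ 3) by (field; lra).
    assert (Hh3 : 0 < h ^ 3) by (apply pow_lt; auto).
    unfold Rdiv at 1. rewrite Rabs_mult, (Rabs_right (/ h ^ 3)) by (left; apply Rinv_0_lt_compat; auto).
    replace (C / (normpt p / h) ^ 4) with (C * h ^ 4 / normpt p ^ 4) in Bd by (field; split; lra).
    apply Rle_lt_trans with (Rabs C * h / normpt p ^ 4).
    + apply (Rmult_le_reg_r (h ^ 3)); auto. rewrite Rmult_assoc, Rinv_l, Rmult_1_r by lra.
      eapply Rle_trans; [exact Bd|]. unfold Rdiv.
      replace (Rabs C * h * / normpt p ^ 4 * h ^ 3) with (Rabs C * h ^ 4 * / normpt p ^ 4) by ring.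
      apply Rmult_le_compat_r; [left; apply Rinv_0_lt_compat; auto|].
      apply Rmult_le_compat_r; [apply pow_le; lra|apply Rle_abs].
    + apply (Rmult_lt_compat_l (Rabs C + 1)) in Hh2; [|lra].
      replace ((Rabs C + 1) * (eps * normpt p ^ 4 / (Rabs C + 1))) with (eps * normpt p ^ 4) in Hh2 by (field; lra).
      apply (Rmult_lt_reg_r (normpt p ^ 4)); auto. unfold Rdiv. rewrite Rmult_assoc, Rinv_l, Rmult_1_r by lra.
      nra.
  - replace ((0 - 0) / h - 0) with 0 by (field; auto). rewrite Rabs_R0. auto.
Qed.

Lemma FTC p u v : p <> pt0 ->
  RInt (fun t => -2 * Qf (fun i j => Kl f (i :: j :: nil) p t) u v) 0 1 = dform1 gamma p u v.
Proof.
  intros Hp.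
  set (Phi := fun t => if Rlt_dec 0 t then / t ^ 2 * dform1 gamma (sc (/ t) p) u v else 0).
  set (dPhi := fun t => -2 * Qf (fun i j => Kl f (i :: j :: nil) p t) u v).
  assert (HI : is_RInt dPhi 0 1 (minus (Phi 1) (Phi 0))).
  { apply (is_RInt_derive (V := R_CompleteNormedModule)).
    - intros x Hx. rewrite Rmin_left, Rmax_right in Hx by lra.
      destruct (Req_dec x 0) as [->|Hx0].
      + replace (dPhi 0) with 0 by (unfold dPhi; rewrite QI_zero by lra; ring).
        apply Phi_deriv0; auto.
      + assert (Hxp : 0 < x) by lra.
        set (c := fun t => sc (/ t) p).
        assert (Hcx : c x <> pt0) by (apply sc_nonzero; auto; apply Rinv_neq_0_compat; lra).
        assert (Hdc : forall k, (k < 4)%nat -> is_derive (fun t => coord (c t) k) x (- coord p k / x ^ 2)).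
        { intros k Hk. apply (is_derive_ext (fun t => / t * coord p k)).
          { intros t. unfold c. rewrite coord_sc. reflexivity. }
          auto_derive; auto. field. lra. }
        assert (HP : forall i j, (i < 4)%nat -> (j < 4)%nat -> is_derive (fun t => partial i (gamma j) (c t)) x
            (sum4 (fun k => (- coord p k / x ^ 2) * partial k (partial i (gamma j)) (c x)))).
        { intros i j Hi Hj. apply (chain_rule (partial i (gamma j)) c x (fun k => - coord p k / x ^ 2)); auto.
          exact (smooth_Dl (gamma j) (i :: nil) (Hsm j Hj)). }
        assert (HD : is_derive (fun t => dform1 gamma (c t) u v) x
           (sum4 (fun i => sum4 (fun j => (coord u i * coord v j - coord u j * coord v i) *
              sum4 (fun k => (- coord p k / x ^ 2) * partial k (partial i (gamma j)) (c x)))))).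
        { unfold dform1. apply is_derive_sum4. intros i Hi. apply is_derive_sum4. intros j Hj.
          apply (is_derive_ext (fun t => (coord u i * coord v j - coord u j * coord v i) * partial i (gamma j) (c t))).
          { intros t. apply Rmult_comm. }
          apply is_derive_scal. apply HP; auto. }
        assert (Hinv : is_derive (fun t => / t ^ 2) x (-2 / x ^ 3)).
        { auto_derive; [intros Hc; apply Hx0; nra| field; lra]. }
        apply (is_derive_ext_loc (fun t => / t ^ 2 * dform1 gamma (c t) u v)).
        { assert (Hx2 : 0 < x / 2) by lra. exists (mkposreal _ Hx2). intros t Ht.
          change (Rabs (t - x) < x / 2) in Ht. apply Rabs_def2 in Ht. unfold Phi.
          destruct (Rlt_dec 0 t); [reflexivity|lra]. }
        pose proof (is_derive_mult_R _ _ x _ _ Hinv HD) as HM.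
        replace (dPhi x) with (-2 / x ^ 3 * dform1 gamma (c x) u v + / x ^ 2 *
           sum4 (fun i => sum4 (fun j => (coord u i * coord v j - coord u j * coord v i) *
              sum4 (fun k => (- coord p k / x ^ 2) * partial k (partial i (gamma j)) (c x))))).
        { exact HM. }
        unfold dPhi. rewrite QI_pointwise by auto. unfold c.
        unfold dD2, sum4. rewrite !coord_sc. simpl Dl. field. lra.
    - intros x Hx. rewrite Rmin_left, Rmax_right in Hx by lra.
      apply (continuous_ext (fun t => -2 * sum4 (fun j => sum4 (fun k => coefQ u v j k * Kl f (j :: Jidx k :: nil) p t)))).
      { intros t. unfold dPhi. rewrite Qf_lin. reflexivity. }
      apply (cmult (fun _ => -2)); [apply cconst|].
      apply csum4. intros j Hj. apply csum4. intros k Hk.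
      apply (cmult (fun _ => coefQ u v j k)); [apply cconst|].
      apply cont_Kl_t; auto; lra. }
  pose proof (is_RInt_unique (V := R_CompleteNormedModule) dPhi 0 1 _ HI) as HI'. transitivity (minus (Phi 1) (Phi 0)); [exact HI'|].
  unfold Phi. destruct (Rlt_dec 0 1) as [_|]; [|lra]. destruct (Rlt_dec 0 0) as [|_]; [lra|].
  rewrite Rinv_1. change (minus (/ 1 ^ 2 * dform1 gamma (sc 1 p) u v) 0) with (/ 1 ^ 2 * dform1 gamma (sc 1 p) u v - 0).
  replace (sc 1 p) with p by (apply pt_ext; intros j Hj; rewrite coord_sc; ring).
  simpl. field.
Qed.
End Final2.

Lemma C_pair_eq (a b : C) : fst a = fst b -> snd a = snd b -> a = b.
Proof. destruct a, b; simpl; intros; subst; reflexivity. Qed.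

Lemma matact_J M q : mat_act M (s1act Ci q) = s1act Ci (mat_act M q).
Proof.
  destruct M as [[a b] [c d]], q as [q1 q2].
  destruct a as [a1 a2], b as [b1 b2], c as [c1 c2], d as [d1 d2], q1 as [x1 y1], q2 as [x2 y2].
  unfold mat_act, s1act, Ci, Cmult, Cplus; simpl. f_equal; f_equal; ring.
Qed.

Lemma s1act_J l q : s1act l (s1act Ci q) = s1act Ci (s1act l q).
Proof.
  destruct l as [a b], q as [[x1 y1] [x2 y2]].
  unfold s1act, Ci, Cmult; simpl. f_equal; f_equal; ring.
Qed.

Lemma matact_sc M s q : mat_act M (sc s q) = sc s (mat_act M q).
Proof.
  destruct M as [[a b] [c d]], q as [q1 q2].
  destruct a as [a1 a2], b as [b1 b2], c as [c1 c2], d as [d1 d2], q1 as [x1 y1], q2 as [x2 y2].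
  unfold mat_act, sc, Cmult, Cplus; simpl. f_equal; f_equal; ring.
Qed.

Lemma s1act_sc l s q : s1act l (sc s q) = sc s (s1act l q).
Proof.
  destruct l as [a b], q as [[x1 y1] [x2 y2]].
  unfold s1act, sc, Cmult; simpl. f_equal; f_equal; ring.
Qed.

Lemma psi_inv (f : pt -> R) (g : pt -> pt) :
  (forall s q, g (sc s q) = sc s (g q)) -> (forall q, q <> pt0 -> f (g q) = f q) ->
  forall p, p <> pt0 -> psi_int f (g p) = psi_int f p.
Proof.
  intros Hc Hf p Hp. unfold psi_int. f_equal. apply RInt_ext. intros x Hx.
  rewrite Rmin_left, Rmax_right in Hx by lra.
  unfold Kl. destruct (Rlt_dec 0 x) as [_|]; [|lra]. simpl.
  rewrite <- Hc. rewrite Hf; auto. apply sc_nonzero; auto. apply Rinv_neq_0_compat; lra.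
Qed.

Theorem proposition4p3 (G : list mat2) (gamma : oneform) :
  finite_subgroup_SU2 G ->
  (forall j, (j < 4)%nat -> smooth_away (gamma j)) ->
  (forall M, In M G -> form1_inv (mat_act M) gamma) ->
  (forall l : C, Cmod l = 1 -> form1_inv (s1act l) gamma) ->
  type11 (dform1 gamma) ->
  (forall j, (j < 4)%nat -> decays (gamma j) 3) ->
  exists psi : pt -> R,
    smooth_away psi /\
    (forall M, In M G -> fun_inv (mat_act M) psi) /\
    (forall l : C, Cmod l = 1 -> fun_inv (s1act l) psi) /\
    (forall p u v, p <> pt0 -> RtoC (dform1 gamma p u v) = i_ddbar psi p u v) /\
    decays psi 2.
Proof.
  intros _ Hsm HG HS1 H11 Hdec.
  pose proof (Hs_ff gamma Hsm) as Hs. pose proof (Hd_ff gamma Hsm Hdec) as Hd.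
  exists (Psi gamma). unfold Psi.
  split; [apply smooth_psi; auto|].
  split; [|split; [|split]].
  - intros M HM p Hp. apply psi_inv; auto.
    + intros s q. apply matact_sc.
    + intros q Hq. unfold ff, fpot. rewrite <- matact_J. apply HG; auto.
  - intros l Hl p Hp. apply psi_inv; auto.
    + intros s q. apply s1act_sc.
    + intros q Hq. unfold ff, fpot. rewrite <- s1act_J. apply HS1; auto.
  - intros p u v Hp. rewrite iddbar_Q.
    + f_equal. symmetry. fold (Psi gamma). rewrite (Qpsi gamma Hsm Hdec p u v Hp).
      apply (FTC gamma Hsm HS1 H11 Hdec p u v Hp).
    + intros i j Hi Hj. apply schwarz; auto. apply smooth_psi; auto.
  - apply decays_psi; auto.
Qed.
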